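(* For $\alpha,\beta>0$ with $\alpha\beta=\pi^2$, \[ \sum_{n=1}^{\infty}\frac{e^{n\alpha}}{n\left(e^{2n\alpha}-1\right)}-\sum_{n=1}^{\infty}\frac{(-1)^n}{n\left(e^{2n\beta}-1\right)}=-\frac{1}{2}\log 2+\frac{\alpha+2\beta}{24}. \] *)

(* Defs.v *)
From Stdlib Require Import Reals.
From Coquelicot Require Import Coquelicot.
Open Scope R_scope.

Definition term1 (a : R) (n : nat) : R :=
  exp (INR n * a) / (INR n * (exp (2 * INR n * a) - 1)).

Definition term2 (b : R) (n : nat) : R :=
  (-1) ^ n / (INR n * (exp (2 * INR n * b) - 1)).

(* Main.v *)
Require Import Defs.
From Stdlib Require Import Reals Lra Lia Psatz.
From Coquelicot Require Import Coquelicot.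
Open Scope R_scope.

Fixpoint fs (f : nat -> R) (n : nat) : R :=
  match n with O => 0 | S m => fs f m + f m end.

Lemma fs_ext f g n : (forall k, (k < n)%nat -> f k = g k) -> fs f n = fs g n.
Proof. induction n; simpl; intros H; auto. rewrite IHn by (intros; apply H; lia). rewrite H by lia; auto. Qed.

Lemma fs_plus f g n : fs (fun k => f k + g k) n = fs f n + fs g n.
Proof. induction n; simpl; [lra|rewrite IHn; lra]. Qed.
Lemma fs_minus f g n : fs (fun k => f k - g k) n = fs f n - fs g n.
Proof. induction n; simpl; [lra|rewrite IHn; lra]. Qed.
Lemma fs_scal c f n : fs (fun k => c * f k) n = c * fs f n.
Proof. induction n; simpl; [lra|rewrite IHn; lra]. Qed.
Lemma fs_const c n : fs (fun _ => c) n = INR n * c.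
Proof. induction n; simpl fs; [simpl; lra|rewrite IHn, S_INR; lra]. Qed.
Lemma fs_le f g n : (forall k, (k < n)%nat -> f k <= g k) -> fs f n <= fs g n.
Proof. induction n; simpl; intros H; [lra|]. assert (H1 := H n). assert (fs f n <= fs g n) by (apply IHn; intros; apply H; lia). assert (f n <= g n) by (apply H; lia). lra. Qed.
Lemma fs_nonneg f n : (forall k, (k < n)%nat -> 0 <= f k) -> 0 <= fs f n.
Proof. intros H. replace 0 with (fs (fun _ => 0) n). apply fs_le; auto. induction n; simpl; auto. rewrite IHn; try lra. intros; apply H; lia. Qed.
Lemma fs_add f m n : fs f (m + n) = fs f m + fs (fun k => f (m + k)%nat) n.
Proof. induction n; simpl. rewrite Nat.add_0_r; lra. rewrite Nat.add_succ_r; simpl; rewrite IHn; lra. Qed.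
Lemma fs_mono f m n : (forall k, 0 <= f k) -> (m <= n)%nat -> fs f m <= fs f n.
Proof. intros H Hmn. replace n with (m + (n - m))%nat by lia. rewrite fs_add.
 assert (0 <= fs (fun k => f (m + k)%nat) (n - m)) by (apply fs_nonneg; auto). lra. Qed.
Lemma fs_swap (F : nat -> nat -> R) m n :
  fs (fun i => fs (fun j => F i j) n) m = fs (fun j => fs (fun i => F i j) m) n.
Proof. induction m; simpl. induction n; simpl; auto; lra.
 rewrite IHm. rewrite <- fs_plus. auto. Qed.
Lemma fs_block f m l : fs f (m * l) = fs (fun i => fs (fun r => f (i * l + r)%nat) l) m.
Proof. induction m; simpl; auto. rewrite Nat.add_comm, fs_add, IHm. f_equal. Qed.
Lemma fs_abs f n : Rabs (fs f n) <= fs (fun k => Rabs (f k)) n.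
Proof. induction n; simpl. rewrite Rabs_R0; lra. eapply Rle_trans. apply Rabs_triang. lra. Qed.

Lemma fs_sum_n f n : fs f (S n) = sum_n f n.
Proof. induction n. simpl. rewrite sum_O; lra. rewrite sum_Sn. rewrite <- IHn. reflexivity. Qed.

Definition ser (f : nat -> R) (l : R) := is_lim_seq (fun n => fs f n) l.

Lemma ser_is_series f l : ser f l -> is_series f l.
Proof. intros H. unfold ser in H. apply is_lim_seq_incr_1 in H.
 unfold is_series. eapply is_lim_seq_ext in H. exact H. intros n. now rewrite fs_sum_n. Qed.
Lemma is_series_ser f l : is_series f l -> ser f l.
Proof. intros H. unfold ser. apply is_lim_seq_incr_1. eapply is_lim_seq_ext; [|exact H].
 intros n; now rewrite fs_sum_n. Qed.

Lemma ser_unique f l1 l2 : ser f l1 -> ser f l2 -> l1 = l2.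
Proof. intros H1 H2. apply is_lim_seq_unique in H1. apply is_lim_seq_unique in H2. rewrite H1 in H2. now injection H2. Qed.
Lemma ser_ext f g l : (forall k, f k = g k) -> ser f l -> ser g l.
Proof. intros H. unfold ser. apply is_lim_seq_ext. intros; apply fs_ext; auto. Qed.
Lemma ser_plus f g a b : ser f a -> ser g b -> ser (fun k => f k + g k) (a + b).
Proof. intros H1 H2. unfold ser. eapply is_lim_seq_ext. intros; symmetry; apply fs_plus. now apply is_lim_seq_plus'. Qed.
Lemma ser_minus f g a b : ser f a -> ser g b -> ser (fun k => f k - g k) (a - b).
Proof. intros H1 H2. unfold ser. eapply is_lim_seq_ext. intros; symmetry; apply fs_minus. now apply is_lim_seq_minus'. Qed.
Lemma ser_scal c f a : ser f a -> ser (fun k => c * f k) (c * a).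
Proof. intros H1. unfold ser. eapply is_lim_seq_ext. intros; symmetry; apply fs_scal.
 apply (is_lim_seq_scal_l _ c a) in H1. exact H1. Qed.
Lemma ser_le f g a b : (forall k, f k <= g k) -> ser f a -> ser g b -> a <= b.
Proof. intros H H1 H2. assert (Rbar_le a b). eapply is_lim_seq_le; [|exact H1|exact H2]. intros; apply fs_le; auto. exact H0. Qed.

Lemma lim_le_const u (l M : R) : is_lim_seq u l -> (forall n, u n <= M) -> l <= M.
Proof. intros H HM. assert (Rbar_le l M). eapply is_lim_seq_le; [exact HM|exact H|apply is_lim_seq_const]. exact H0. Qed.
Lemma lim_ge_const u (l M : R) : is_lim_seq u l -> (forall n, M <= u n) -> M <= l.
Proof. intros H HM. assert (Rbar_le M l). eapply is_lim_seq_le; [exact HM|apply is_lim_seq_const|exact H]. exact H0. Qed.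
Lemma lim_ge_eventually u (l M : R) N : is_lim_seq u l -> (forall n, (N <= n)%nat -> M <= u n) -> M <= l.
Proof. intros H HM. apply (lim_ge_const (fun n => u (N + n)%nat)). 
 apply (is_lim_seq_subseq u l (fun n => (N+n)%nat)); auto.
 intros P [K HK]. exists K. intros n Hn. apply HK. lia. intros; apply HM; lia. Qed.
Lemma lim_le_eventually u (l M : R) N : is_lim_seq u l -> (forall n, (N <= n)%nat -> u n <= M) -> l <= M.
Proof. intros H HM. apply (lim_le_const (fun n => u (N + n)%nat)). 
 apply (is_lim_seq_subseq u l (fun n => (N+n)%nat)); auto.
 intros P [K HK]. exists K. intros n Hn. apply HK. lia. intros; apply HM; lia. Qed.

Lemma ser_nonneg_bounded f M : (forall k, 0 <= f k) -> (forall n, fs f n <= M) ->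
  exists l, ser f l /\ l <= M /\ (forall n, fs f n <= l).
Proof. intros H HM. destruct (ex_finite_lim_seq_incr (fs f) M) as [l Hl]; auto.
 intros n; simpl; specialize (H n); lra.
 exists l; split; auto. split. eapply lim_le_const; eauto.
 intros n. apply (lim_ge_eventually _ _ _ n Hl). intros; apply fs_mono; auto. Qed.

Lemma ser_partial_le f l n : (forall k, 0 <= f k) -> ser f l -> fs f n <= l.
Proof. intros H Hl. apply (lim_ge_eventually _ _ _ n Hl). intros; apply fs_mono; auto. Qed.

Lemma ser_shift f l m : ser f l -> ser (fun k => f (m + k)%nat) (l - fs f m).
Proof. intros H. unfold ser.
 assert (is_lim_seq (fun n => fs f (m + n)) l).
 { apply (is_lim_seq_subseq (fs f) l (fun n => (m+n)%nat)); auto.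
   intros P [K HK]. exists K. intros n Hn. apply HK. lia. }
 eapply is_lim_seq_ext. 2: apply (is_lim_seq_minus' _ _ _ _ H0 (is_lim_seq_const (fs f m))).
 intros n; simpl. rewrite fs_add. lra. Qed.

Lemma ser_exists_le u v lv : (forall k, Rabs (u k) <= v k) -> ser v lv -> exists lu, ser u lu.
Proof. intros H Hv. assert (ex_series u). apply (ex_series_le u v). intros n; apply H.
 exists lv; apply ser_is_series; auto. destruct H0 as [l Hl]. exists l; apply is_series_ser; auto. Qed.

Lemma ser_abs_le u v lu lv : (forall k, Rabs (u k) <= v k) -> ser u lu -> ser v lv -> Rabs lu <= lv.
Proof. intros H Hu Hv. apply Rabs_le. split.
 - apply (ser_le (fun k => - v k) u); auto. intros k; specialize (H k); apply Rabs_le_between in H; lra.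
   replace (-lv) with ((-1)*lv) by lra. eapply ser_ext; [|apply ser_scal; exact Hv]. intros; simpl; lra.
 - apply (ser_le u v); auto. intros k; specialize (H k); apply Rabs_le_between in H; lra. Qed.

Lemma ser_tail_le u v lu lv n : (forall k, Rabs (u k) <= v k) -> ser u lu -> ser v lv ->
  Rabs (lu - fs u n) <= lv - fs v n.
Proof. intros H Hu Hv. apply (ser_abs_le (fun k => u (n+k)%nat) (fun k => v (n+k)%nat)); auto; apply ser_shift; auto. Qed.

Lemma ser_tail_lim v lv : ser v lv -> is_lim_seq (fun n => lv - fs v n) 0.
Proof. intros H. replace 0 with (lv - lv) by lra. apply is_lim_seq_minus'; auto. apply is_lim_seq_const. Qed.

Lemma INR_S_pos n : 0 < INR n + 1.
Proof. pose proof (pos_INR n); lra. Qed.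

Lemma invsq_partial n : fs (fun k => / (INR k + 1)^2) (S n) <= 2 - / (INR n + 1).
Proof. induction n. simpl. lra.
 change (fs (fun k => / (INR k + 1)^2) (S n) + / (INR (S n) + 1)^2 <= 2 - / (INR (S n) + 1)).
 rewrite S_INR. pose proof (pos_INR n).
 assert (/ (INR n + 1 + 1) ^ 2 <= / (INR n + 1) - / (INR n + 1 + 1)).
 { rewrite <- Rdiv_1_l. apply Rle_trans with (1/((INR n + 1) * (INR n + 1 + 1))).
   apply Rmult_le_compat_l; try lra. apply Rinv_le_contravar. nra. nra.
   right. field. lra. }
 lra. Qed.

Definition Zeta2 := Series (fun k => / (INR k + 1)^2).
Lemma Zeta2_ser : ser (fun k => / (INR k + 1)^2) Zeta2.
Proof. destruct (ser_nonneg_bounded (fun k => / (INR k + 1)^2) 2) as [l [Hl _]].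
 intros k; pose proof (INR_S_pos k). apply Rlt_le, Rinv_0_lt_compat. nra.
 intros n. destruct n. simpl; lra. pose proof (invsq_partial n). pose proof (INR_S_pos n).
 assert (0 < / (INR n + 1)) by (apply Rinv_0_lt_compat; lra). lra.
 unfold Zeta2. rewrite (is_series_unique _ l); auto. apply ser_is_series; auto. Qed.
Lemma Zeta2_pos : 0 < Zeta2.
Proof. apply Rlt_le_trans with (fs (fun k => / (INR k + 1)^2) 1). simpl. lra.
 apply ser_partial_le. intros k; pose proof (INR_S_pos k). apply Rlt_le, Rinv_0_lt_compat. nra. apply Zeta2_ser. Qed.

Lemma atan_mvt u v : v < u -> exists c, v < c < u /\ atan u - atan v = (u - v) / (1 + c^2).
Proof. intros H. destruct (MVT_cor2 atan (fun x => / (1 + x^2)) v u H) as [c [Hc Hc2]].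
 intros; apply derivable_pt_lim_atan. exists c; split; auto. rewrite Hc. field. nra. Qed.

Lemma atan_diff_bounds u v : 0 <= v -> v <= u ->
  (u - v) / (1 + u^2) <= atan u - atan v <= (u - v) / (1 + v^2).
Proof. intros Hv Huv. destruct (Req_dec u v). subst. unfold Rdiv. rewrite Rminus_diag, !Rmult_0_l. lra.
 destruct (atan_mvt u v) as [c [Hc Heq]]. lra. rewrite Heq. split.
 - unfold Rdiv; apply Rmult_le_compat_l. lra. apply Rinv_le_contravar; nra.
 - unfold Rdiv; apply Rmult_le_compat_l. lra. apply Rinv_le_contravar; nra. Qed.

Lemma atan_0' : atan 0 = 0.
Proof. apply atan_0. Qed.

Lemma atan_le_id u : 0 <= u -> atan u <= u.
Proof. intros H. destruct (atan_diff_bounds u 0 (Rle_refl 0) H). rewrite atan_0 in *.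
 assert ((u - 0) / (1 + 0^2) = u) by (field). lra. Qed.
Lemma atan_ge u : 0 <= u -> u / (1 + u^2) <= atan u.
Proof. intros H. destruct (atan_diff_bounds u 0 (Rle_refl 0) H). rewrite atan_0 in *.
 replace (u - 0) with u in * by lra. lra. Qed.
Lemma atan_nonneg u : 0 <= u -> 0 <= atan u.
Proof. intros H. pose proof (atan_ge u H). assert (0 <= u / (1 + u^2)). apply Rdiv_le_0_compat; nra. lra. Qed.
Lemma atan_lip u v : 0 <= v -> v <= u -> atan u - atan v <= u - v.
Proof. intros H1 H2. destruct (atan_diff_bounds u v H1 H2) as [_ H]. eapply Rle_trans; [exact H|].
 unfold Rdiv. rewrite <- (Rmult_1_r (u - v)) at 2. apply Rmult_le_compat_l. lra.
 rewrite <- Rinv_1. apply Rinv_le_contravar; nra. Qed.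

Lemma psi_decr u v : 0 < u -> u <= v -> u * atan v <= v * atan u.
Proof. intros Hu Huv. destruct (atan_diff_bounds v u) as [_ H]; try lra.
 pose proof (atan_ge u (Rlt_le _ _ Hu)).
 assert (u * (atan v - atan u) <= u * ((v - u) / (1 + u^2))) by (apply Rmult_le_compat_l; lra).
 assert (u * ((v - u) / (1 + u^2)) = (v - u) * (u / (1 + u^2))) by (field; nra).
 assert ((v - u) * (u / (1 + u^2)) <= (v - u) * atan u) by (apply Rmult_le_compat_l; lra).
 nra. Qed.

Lemma pi_half_minus_atan u : 0 < u -> PI/2 - atan u = atan (/ u).
Proof. intros H. rewrite atan_inv; auto. Qed.

(* Sum-integral comparison for 1/(a^2+k^2) *)
Lemma term_atan_bounds a s : 0 < a -> 0 <= s ->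
  / (a^2 + (s+1)^2) <= (atan ((s+1)/a) - atan (s/a)) / a <= / (a^2 + s^2).
Proof. intros Ha Hs. assert (0 <= s/a) by (apply Rdiv_le_0_compat; lra).
 assert (s/a <= (s+1)/a) by (unfold Rdiv; apply Rmult_le_compat_r; [apply Rlt_le, Rinv_0_lt_compat|]; lra).
 destruct (atan_diff_bounds ((s+1)/a) (s/a)) as [H1 H2]; auto.
 replace ((s + 1) / a - s / a) with (/a) in * by (field; lra).
 split.
 - apply Rle_trans with ((/ a / (1 + ((s + 1) / a) ^ 2))/a).
   right. field_simplify; try split; try lra; try nra. 
   unfold Rdiv at 2. apply Rmult_le_compat_r; auto. apply Rlt_le, Rinv_0_lt_compat; lra.
 - apply Rle_trans with ((/ a / (1 + (s / a) ^ 2))/a).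
   unfold Rdiv at 1. apply Rmult_le_compat_r; auto. apply Rlt_le, Rinv_0_lt_compat; lra.
   right. field_simplify; try split; try lra; try nra. Qed.

Lemma fs_telescope g K : fs (fun k => g (S k) - g k) K = g K - g O.
Proof. induction K; simpl; [lra|rewrite IHK; lra]. Qed.

Lemma arch_nat x : exists n, x < INR n.
Proof. destruct (Rle_lt_dec x 0). exists 1%nat; simpl; lra.
 destruct (nfloor_ex x) as [n Hn]. lra. exists (S n). rewrite S_INR; lra. Qed.

Lemma le_of_approx L T c : 0 <= c -> (forall K, L - c / (INR K + 1) <= T) -> L <= T.
Proof. intros Hc H. destruct (Rle_lt_dec L T); auto. exfalso.
 destruct (arch_nat (c / (L - T))) as [K HK]. specialize (H K).
 pose proof (pos_INR K).
 assert (c / (INR K + 1) < L - T).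
 { apply Rmult_lt_reg_r with (INR K + 1). lra. unfold Rdiv. rewrite Rmult_assoc, Rinv_l by lra.
   assert (c / (L - T) * (L - T) = c) by (field; lra). nra. }
 lra. Qed.

Definition tsum a m K := fs (fun k => / (a^2 + (INR (m + 1 + k))^2)) K.

Lemma tsum_upper a m K : 0 < a ->
  tsum a m K <= (atan (INR (m + K) / a) - atan (INR m / a)) / a.
Proof. intros Ha. unfold tsum.
 set (g := fun k => atan (INR (m + k) / a) / a).
 replace ((atan (INR (m + K) / a) - atan (INR m / a)) / a) with (g K - g O)
   by (unfold g; rewrite Nat.add_0_r; field; lra).
 rewrite <- fs_telescope. apply fs_le. intros k _. unfold g.
 destruct (term_atan_bounds a (INR (m + k)) Ha (pos_INR _)) as [H1 H2].
 replace (INR (m + 1 + k)) with (INR (m + k) + 1) by (rewrite <- S_INR; f_equal; lia).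
 replace (INR (m + S k)) with (INR (m + k) + 1) by (rewrite <- S_INR; f_equal; lia).
 replace (atan ((INR (m + k) + 1) / a) / a - atan (INR (m + k) / a) / a) with
   ((atan ((INR (m + k) + 1) / a) - atan (INR (m + k) / a)) / a) by (field; lra). lra. Qed.

Lemma tsum_lower a m K : 0 < a ->
  (atan ((INR (m + K) + 1) / a) - atan ((INR m + 1) / a)) / a <= tsum a m K.
Proof. intros Ha. unfold tsum.
 set (g := fun k => atan ((INR (m + k) + 1) / a) / a).
 replace ((atan ((INR (m + K) + 1) / a) - atan ((INR m + 1) / a)) / a) with (g K - g O)
   by (unfold g; rewrite Nat.add_0_r; field; lra).
 rewrite <- fs_telescope. apply fs_le. intros k _. unfold g.
 destruct (term_atan_bounds a (INR (m + 1 + k)) Ha (pos_INR _)) as [H1 H2].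
 replace (INR (m + 1 + k)) with (INR (m + k) + 1) in * by (rewrite <- S_INR; f_equal; lia).
 replace (INR (m + S k)) with (INR (m + k) + 1) by (rewrite <- S_INR; f_equal; lia).
 replace (atan ((INR (m + k) + 1 + 1) / a) / a - atan ((INR (m + k) + 1) / a) / a) with
   ((atan ((INR (m + k) + 1 + 1) / a) - atan ((INR (m + k) + 1) / a)) / a) by (field; lra). lra. Qed.

Lemma tail_ser a m : 0 < a -> exists T, ser (fun k => / (a^2 + (INR (m + 1 + k))^2)) T /\
  (PI/2 - atan ((INR m + 1) / a)) / a <= T <= (PI/2 - atan (INR m / a)) / a.
Proof. intros Ha.
 destruct (ser_nonneg_bounded (fun k => / (a^2 + (INR (m + 1 + k))^2)) ((PI/2 - atan (INR m / a)) / a))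
   as [T [HT [HTle HTp]]].
 - intros k. apply Rlt_le, Rinv_0_lt_compat. pose proof (pos_INR (m+1+k)). nra.
 - intros n. eapply Rle_trans. apply (tsum_upper a m n Ha). unfold Rdiv at 1 3. apply Rmult_le_compat_r.
   apply Rlt_le, Rinv_0_lt_compat; lra. pose proof (atan_bound (INR (m + n) / a)). lra.
 - exists T; split; auto. split; auto.
   apply (le_of_approx _ _ (/ a * a)). apply Rlt_le. apply Rmult_lt_0_compat; try lra. apply Rinv_0_lt_compat; lra.
   intros K. eapply Rle_trans; [|apply (HTp K)]. eapply Rle_trans; [|apply (tsum_lower a m K Ha)].
   assert (Hp : 0 < (INR (m + K) + 1) / a) by (apply Rdiv_lt_0_compat; [apply INR_S_pos|lra]).
   pose proof (pi_half_minus_atan _ Hp).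
   pose proof (atan_le_id (/ ((INR (m + K) + 1) / a))).
   assert (0 <= / ((INR (m + K) + 1) / a)) by (apply Rlt_le, Rinv_0_lt_compat; auto).
   assert (/ ((INR (m + K) + 1) / a) <= a / (INR K + 1)).
   { rewrite Rinv_div. unfold Rdiv. apply Rmult_le_compat_l. lra. apply Rinv_le_contravar. apply INR_S_pos.
     rewrite plus_INR. pose proof (pos_INR m). lra. }
   assert (atan ((INR (m + K) + 1) / a) >= PI/2 - a / (INR K + 1)) by lra.
   apply Rle_trans with ((PI / 2 - atan ((INR m + 1) / a)) / a - a / (INR K + 1) / a).
   pose proof (INR_S_pos K). right. field. repeat split; lra.
   unfold Rdiv. apply Rle_trans with ((PI / 2 - a * / (INR K + 1) - atan ((INR m + 1) * / a)) * / a).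
   pose proof (INR_S_pos K). right. field. repeat split; lra.
   apply Rmult_le_compat_r. apply Rlt_le, Rinv_0_lt_compat; lra. unfold Rdiv in *; lra. Qed.

Definition ak (y : R) (k : nat) := 2 * y / (y^2 + (INR k + 1)^2).
Definition dk (y : R) (k : nat) := 2 * ((INR k + 1)^2 - y^2) / (y^2 + (INR k + 1)^2)^2.
Definition A (y : R) := Series (ak y).
Definition B (y : R) := Series (dk y).

Lemma den_pos y k : 0 < y^2 + (INR k + 1)^2.
Proof. pose proof (INR_S_pos k). nra. Qed.

Lemma ak_bound y k : Rabs (ak y k) <= (2 * Rabs y) * / (INR k + 1)^2.
Proof. unfold ak. pose proof (den_pos y k). pose proof (INR_S_pos k).
 rewrite Rabs_div by lra. rewrite Rabs_mult, (Rabs_right 2) by lra. rewrite (Rabs_right (y^2 + _)) by lra.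
 unfold Rdiv. apply Rmult_le_compat_l. pose proof (Rabs_pos y); lra.
 apply Rinv_le_contravar. nra. nra. Qed.

Lemma dk_bound y k : Rabs (dk y k) <= 2 * / (INR k + 1)^2.
Proof. unfold dk. pose proof (den_pos y k). pose proof (INR_S_pos k).
 rewrite Rabs_div by nra. rewrite Rabs_mult, (Rabs_right 2) by lra. rewrite (Rabs_right (_^2)) by nra.
 assert (Rabs ((INR k + 1) ^ 2 - y ^ 2) <= y^2 + (INR k + 1)^2).
 { apply Rabs_le; nra. }
 unfold Rdiv. rewrite Rmult_assoc. apply Rmult_le_compat_l. lra.
 apply Rle_trans with ((y ^ 2 + (INR k + 1) ^ 2) * / (y ^ 2 + (INR k + 1) ^ 2) ^ 2).
 apply Rmult_le_compat_r. apply Rlt_le, Rinv_0_lt_compat; nra. auto.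
 replace ((y ^ 2 + (INR k + 1) ^ 2) * / (y ^ 2 + (INR k + 1) ^ 2) ^ 2) with (/ (y ^ 2 + (INR k + 1) ^ 2)) by (field; lra).
 apply Rinv_le_contravar. nra. nra. Qed.

Lemma invsq_scal_ser c : ser (fun k => c * / (INR k + 1)^2) (c * Zeta2).
Proof. apply ser_scal, Zeta2_ser. Qed.

Lemma A_ser y : ser (ak y) (A y).
Proof. destruct (ser_exists_le (ak y) _ _ (ak_bound y) (invsq_scal_ser (2 * Rabs y))) as [l Hl].
 unfold A. rewrite (is_series_unique _ l); auto. apply ser_is_series; auto. Qed.
Lemma B_ser y : ser (dk y) (B y).
Proof. destruct (ser_exists_le (dk y) _ _ (dk_bound y) (invsq_scal_ser 2)) as [l Hl].
 unfold B. rewrite (is_series_unique _ l); auto. apply ser_is_series; auto. Qed.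

Lemma A_nonneg y : 0 <= y -> 0 <= A y.
Proof. intros Hy. apply (ser_le (fun _ => 0) (ak y)). intros k; unfold ak. pose proof (den_pos y k).
 apply Rdiv_le_0_compat; lra. unfold ser. eapply is_lim_seq_ext. 2: apply is_lim_seq_const.
 intros n; symmetry; induction n; [reflexivity|]. simpl. rewrite IHn. ring. apply A_ser. Qed.

Lemma A_le_zeta y : 0 <= y -> A y <= 2 * y * Zeta2.
Proof. intros Hy. apply (ser_le (ak y) (fun k => 2 * y * / (INR k + 1)^2)); [|apply A_ser|apply invsq_scal_ser].
 intros k. pose proof (ak_bound y k). rewrite (Rabs_right y) in H by lra. apply Rabs_le_between in H. lra. Qed.

Lemma A_bounds y : 0 < y -> PI - 2 / y <= A y <= PI.
Proof. intros Hy. destruct (tail_ser y 0 Hy) as [T [HT [H1 H2]]].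
 assert (A y = 2 * y * T).
 { apply (ser_unique (ak y)). apply A_ser. eapply ser_ext; [|apply (ser_scal (2*y)); exact HT].
   intros k; unfold ak. simpl (0+1+k)%nat. rewrite S_INR. unfold Rdiv. ring. }
 rewrite H. simpl INR in *. replace (0 / y) with 0 in H2 by (field; lra). rewrite atan_0 in H2.
 replace ((0+1)/y) with (/y) in H1 by (field; lra).
 pose proof (atan_le_id (/y)). assert (0 <= /y) by (apply Rlt_le, Rinv_0_lt_compat; auto).
 split.
 - apply Rle_trans with (2 * y * ((PI / 2 - atan (/ y)) / y)). 
   replace (2 * y * ((PI / 2 - atan (/ y)) / y)) with (PI - 2 * atan (/y)) by (field; lra).
   unfold Rdiv; lra. apply Rmult_le_compat_l; lra.
 - apply Rle_trans with (2 * y * ((PI / 2 - 0) / y)). apply Rmult_le_compat_l; lra.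
   right; field; lra. Qed.

Lemma fs_derive (F F' : R -> nat -> R) y n :
  (forall k, derivable_pt_lim (fun z => F z k) y (F' y k)) ->
  derivable_pt_lim (fun z => fs (F z) n) y (fs (F' y) n).
Proof. intros H. induction n; simpl.
 - apply (derivable_pt_lim_const 0 y).
 - apply (derivable_pt_lim_plus (fun z => fs (F z) n) (fun z => F z n)); auto. Qed.

Lemma ak_derive y k : derivable_pt_lim (fun z => ak z k) y (dk y k).
Proof. apply is_derive_Reals. unfold ak, dk. pose proof (den_pos y k).
 auto_derive. lra. field. lra. Qed.

Lemma A_derive y : derivable_pt_lim A y (B y).
Proof.
 set (d := mkposreal 1 Rlt_0_1).
 apply (CVU_derivable (fun n z => fs (ak z) n) (fun n z => fs (dk z) n) A B y d); [| | | unfold Boule; rewrite Rminus_diag, Rabs_R0; simpl; lra].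
 - intros eps Heps. pose proof (ser_tail_lim _ _ (invsq_scal_ser 2)) as Ht.
   apply is_lim_seq_spec in Ht. destruct (Ht (mkposreal eps Heps)) as [N HN].
   exists N. intros n z Hn _. eapply Rle_lt_trans. apply (ser_tail_le (dk z) _ _ _ n (dk_bound z) (B_ser z) (invsq_scal_ser 2)).
   specialize (HN n Hn). change (pos (mkposreal eps Heps)) with eps in HN. apply Rabs_lt_between in HN. lra.
 - intros x _. apply is_lim_seq_Reals. apply A_ser.
 - intros n x _. apply fs_derive. intros; apply ak_derive. Qed.

Definition Hn n := fs (fun i => / (INR i + 1)) n.

Lemma fs_first f n : fs f (S n) = f O + fs (fun k => f (S k)) n.
Proof. replace (S n) with (1 + n)%nat by lia. rewrite fs_add. simpl. lra. Qed.

Lemma fs_rev f n : fs f n = fs (fun k => f (n - 1 - k)%nat) n.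
Proof. induction n. auto. transitivity (fs f n + f n); [reflexivity|].
 rewrite (fs_first (fun k => f (S n - 1 - k)%nat)). rewrite IHn. replace (S n - 1 - 0)%nat with n by lia.
 rewrite Rplus_comm. f_equal. apply fs_ext; intros; f_equal; lia. Qed.

Definition wjk j k := if Nat.eq_dec j k then 0 else / ((INR k + 1)^2 - (INR j + 1)^2).
Definition cN j N := fs (wjk j) N.

Lemma wjk_anti j k : wjk j k = - wjk k j.
Proof. unfold wjk. destruct (Nat.eq_dec j k), (Nat.eq_dec k j); try lia; try lra.
 assert (INR k <> INR j) by (apply not_INR; auto). pose proof (pos_INR k). pose proof (pos_INR j).
 assert ((INR k + 1)^2 - (INR j + 1)^2 <> 0). { intro. apply H. nra. }
 field. split; auto. intro; apply H2; lra. Qed.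

Lemma INR_S' n : INR (S n) = INR n + 1.
Proof. apply S_INR. Qed.

Lemma cN_base j : cN j (S j) = 3 / (4 * (INR j + 1)^2) - Hn (2 * j + 2) / (2 * (INR j + 1)).
Proof. unfold cN. simpl fs. unfold wjk at 2. destruct (Nat.eq_dec j j); [|lia]. rewrite Rplus_0_r.
 set (J := INR j + 1). assert (HJ : 0 < J) by apply INR_S_pos.
 rewrite (fs_ext _ (fun k => / (2 * J) * (- / (INR (j - k)) - / (INR (k + j + 1) + 1)))).
 2:{ intros k Hk. unfold wjk. destruct (Nat.eq_dec j k); [lia|].
     rewrite minus_INR by lia. rewrite plus_INR, plus_INR. simpl INR. fold J.
     assert (INR k < INR j) by (apply lt_INR; auto). pose proof (pos_INR k).
     unfold J. field. repeat split; nra. }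
 rewrite fs_scal, fs_minus.
 assert (E1 : fs (fun k => - / INR (j - k)) j = - Hn j).
 { unfold Hn. rewrite (fs_rev (fun k => / (INR k + 1))).
   replace (- fs (fun k => / (INR (j - 1 - k) + 1)) j) with ((-1) * fs (fun k => / (INR (j - 1 - k) + 1)) j) by ring.
   rewrite <- fs_scal. apply fs_ext. intros k Hk. rewrite <- S_INR. replace (S (j - 1 - k)) with (j - k)%nat by lia. ring. }
 assert (E2 : fs (fun k => / (INR (k + j + 1) + 1)) j = Hn (S j + j) - Hn (S j)).
 { unfold Hn. rewrite (fs_add _ (S j) j). ring_simplify. apply fs_ext. intros k _. f_equal. f_equal. f_equal. lia. }
 rewrite E1, E2.
 assert (E3 : Hn (2 * j + 2) = Hn (S j + j) + / (2 * J)).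
 { unfold Hn. replace (2 * j + 2)%nat with (S (S j + j)) by lia.
   transitivity (fs (fun i : nat => / (INR i + 1)) (S j + j) + / (INR (S j + j) + 1)); [reflexivity|].
   f_equal. f_equal. rewrite plus_INR, S_INR. unfold J. ring. }
 assert (E4 : Hn (S j) = Hn j + / J). { unfold Hn. simpl fs. auto. }
 rewrite E3, E4. field. lra. Qed.

Lemma cN_closed j d : cN j (S j + d) =
  3 / (4 * (INR j + 1)^2) - (Hn (2 * j + 2 + d) - Hn d) / (2 * (INR j + 1)).
Proof. induction d.
 - rewrite Nat.add_0_r, cN_base. unfold Hn at 3. simpl fs. rewrite Nat.add_0_r. field. pose proof (INR_S_pos j); lra.
 - unfold cN in *. rewrite Nat.add_succ_r. simpl fs at 1. simpl in IHd. rewrite IHd.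
   unfold wjk. destruct (Nat.eq_dec j (S (j + d))); [lia|].
   unfold Hn. replace (2 * j + 2 + S d)%nat with (S (2 * j + 2 + d)) by lia. simpl fs.
   rewrite !S_INR, !plus_INR. replace (INR 2) with 2 by (simpl; lra). replace (INR 0) with 0 by auto.
   pose proof (pos_INR j). pose proof (pos_INR d).
   field. repeat split; nra. Qed.

Definition eN j N := (Hn (N + j + 1) - Hn (N - j - 1)) / (2 * (INR j + 1)).

Lemma cN_eq j N : (j < N)%nat -> cN j N = 3 / (4 * (INR j + 1)^2) - eN j N.
Proof. intros H. replace N with (S j + (N - j - 1))%nat by lia. rewrite cN_closed. unfold eN.
 f_equal. f_equal. f_equal. f_equal. lia. f_equal. lia. Qed.

Lemma eN_bounds j N : (j < N)%nat -> 0 <= eN j N <= / (INR (N - j)).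
Proof. intros H. unfold eN. replace (N + j + 1)%nat with ((N - j - 1) + (2 * j + 2))%nat by lia.
 unfold Hn. rewrite fs_add. set (m := (N - j - 1)%nat).
 replace (fs (fun i : nat => / (INR i + 1)) m + fs (fun k : nat => / (INR (m + k) + 1)) (2 * j + 2) -
    fs (fun i : nat => / (INR i + 1)) m) with (fs (fun k : nat => / (INR (m + k) + 1)) (2 * j + 2)) by ring.
 assert (HJ : 0 < 2 * (INR j + 1)) by (pose proof (INR_S_pos j); lra).
 split.
 - apply Rdiv_le_0_compat; auto. apply fs_nonneg. intros k _. apply Rlt_le, Rinv_0_lt_compat, INR_S_pos.
 - apply Rle_trans with (fs (fun _ => / INR (N - j)) (2 * j + 2) / (2 * (INR j + 1))).
   unfold Rdiv. apply Rmult_le_compat_r. apply Rlt_le, Rinv_0_lt_compat; auto.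
   apply fs_le. intros k _. apply Rinv_le_contravar. apply lt_0_INR; lia.
   rewrite <- S_INR. apply le_INR. unfold m. lia.
   rewrite fs_const. rewrite plus_INR, mult_INR. simpl INR. right. field. split; try lra.
   apply not_0_INR; lia. Qed.

Definition bj y j := / (y^2 + (INR j + 1)^2).

Lemma prod_decomp y j k : ak y j * ak y k =
  (if Nat.eq_dec j k then ak y j ^ 2 else 0) + 4 * y^2 * ((bj y j - bj y k) * wjk j k).
Proof. unfold wjk, ak, bj. pose proof (den_pos y j). pose proof (den_pos y k).
 destruct (Nat.eq_dec j k). subst. ring.
 assert (INR k <> INR j) by (apply not_INR; auto). pose proof (pos_INR k). pose proof (pos_INR j).
 assert ((INR k + 1)^2 - (INR j + 1)^2 <> 0). { intro. apply H1. nra. }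
 field. repeat split; lra. Qed.

Lemma delta_sum j N c : (j < N)%nat -> fs (fun k => if Nat.eq_dec j k then c else 0) N = c.
Proof. induction N; intros H. lia. simpl. destruct (Nat.eq_dec j N).
 - subst. rewrite fs_ext with (g := fun _ => 0). rewrite fs_const; ring.
   intros k Hk. destruct (Nat.eq_dec N k); auto; lia.
 - rewrite IHN by lia. ring. Qed.

Lemma square_fs y N : (fs (ak y) N)^2 = fs (fun j => ak y j ^ 2) N + 8 * y^2 * fs (fun j => bj y j * cN j N) N.
Proof.
 assert (E0 : (fs (ak y) N)^2 = fs (fun j => fs (fun k => ak y j * ak y k) N) N).
 { rewrite (fs_ext (fun j => fs (fun k => ak y j * ak y k) N) (fun j => ak y j * fs (ak y) N)).
   2:{ intros; apply fs_scal. }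
   rewrite (fs_ext (fun j => ak y j * fs (ak y) N) (fun j => fs (ak y) N * ak y j)) by (intros; ring).
   rewrite fs_scal. ring. }
 rewrite E0. rewrite (fs_ext _ (fun j => ak y j ^ 2 + 4 * y^2 * (bj y j * cN j N - fs (fun k => bj y k * wjk j k) N))).
 2:{ intros j Hj. rewrite (fs_ext _ (fun k => (if Nat.eq_dec j k then ak y j ^ 2 else 0) + 4 * y^2 * (bj y j * wjk j k - bj y k * wjk j k))).
     rewrite fs_plus, delta_sum by auto. rewrite fs_scal, fs_minus, fs_scal. unfold cN. ring.
     intros k _. rewrite prod_decomp. ring. }
 rewrite fs_plus, fs_scal, fs_minus.
 rewrite (fs_swap (fun j k => bj y k * wjk j k)).
 rewrite (fs_ext (fun j => fs (fun i => bj y j * wjk i j) N) (fun j => - (bj y j * cN j N))).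
 2:{ intros j _. unfold cN. rewrite <- (Rmult_1_l (fs (wjk j) N)). rewrite <- fs_scal.
     replace (- (bj y j * fs (fun k => 1 * wjk j k) N)) with ((- bj y j) * fs (fun k => 1 * wjk j k) N) by ring.
     rewrite <- fs_scal. apply fs_ext. intros i _. rewrite (wjk_anti i j). ring. }
 rewrite (fs_ext (fun j => - (bj y j * cN j N)) (fun j => (-1) * (bj y j * cN j N))) by (intros; ring).
 rewrite fs_scal. ring. Qed.

Lemma recip_bound J m L : 1 <= J -> 1 <= m -> J + m = L ->
  / (J^2 * m) <= 2 / (L * J^2) + 4 / L^2.
Proof. intros HJ Hm HL.
 assert (0 < 2 / (L * J^2)) by (apply Rdiv_lt_0_compat; nra).
 assert (0 < 4 / L^2) by (apply Rdiv_lt_0_compat; nra).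
 destruct (Rle_lt_dec (L/2) m).
 - assert (/ (J^2 * m) <= 2 / (L * J^2)).
   { apply Rle_trans with (/ (J^2 * (L/2))). apply Rinv_le_contravar; nra. right; field; nra. }
   lra.
 - assert (/ (J^2 * m) <= 4 / L^2).
   { apply Rle_trans with (/ (J^2)). apply Rinv_le_contravar; nra.
     apply Rle_trans with (/ ((L/2)^2)). apply Rinv_le_contravar; nra. right; field; nra. }
   lra. Qed.

Lemma lim_c_over_n c : is_lim_seq (fun n => c / (INR n + 1)) 0.
Proof. apply is_lim_seq_spec. intros eps. destruct (arch_nat (Rabs c / eps)) as [N HN].
 exists N. intros n Hn. rewrite Rminus_0_r. pose proof (pos_INR n). pose proof (cond_pos eps).
 assert (INR N <= INR n) by (apply le_INR; lia).
 unfold Rdiv. rewrite Rabs_mult. rewrite (Rabs_right (/ _)) by (apply Rle_ge, Rlt_le, Rinv_0_lt_compat; lra).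
 apply Rmult_lt_reg_r with (INR n + 1). lra. rewrite Rmult_assoc, Rinv_l by lra.
 assert (Rabs c / eps * eps = Rabs c) by (field; lra).
 assert (Rabs c < eps * (INR n + 1)). { assert (Rabs c / eps < INR n + 1) by lra. nra. }
 lra. Qed.

Lemma err_lim y : is_lim_seq (fun N => fs (fun j => bj y j * eN j N) N) 0.
Proof.
 apply (is_lim_seq_le_le (fun _ => 0) _ (fun N => (2 * Zeta2 + 4) / (INR N + 1))); [|apply is_lim_seq_const|apply lim_c_over_n].
 intros N. split.
 - apply fs_nonneg. intros j Hj. destruct (eN_bounds j N Hj). unfold bj. pose proof (den_pos y j).
   apply Rmult_le_pos; auto. apply Rlt_le, Rinv_0_lt_compat; lra.
 - apply Rle_trans with (fs (fun j => 2 / (INR N + 1) * / (INR j + 1)^2 + 4 / (INR N + 1)^2) N).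
   + apply fs_le. intros j Hj. destruct (eN_bounds j N Hj). pose proof (INR_S_pos j).
     assert (bj y j <= / (INR j + 1)^2). { unfold bj. apply Rinv_le_contravar. nra. pose proof (pow2_ge_0 y). lra. }
     assert (0 < INR (N - j)) by (apply lt_0_INR; lia).
     assert (0 <= bj y j) by (unfold bj; apply Rlt_le, Rinv_0_lt_compat, den_pos).
     apply Rle_trans with (/ (INR j + 1)^2 * / INR (N - j)).
     apply Rmult_le_compat; auto. apply Rle_trans with (/ ((INR j + 1)^2 * INR (N - j))).
     right. rewrite Rinv_mult. auto.
     eapply Rle_trans. apply (recip_bound (INR j + 1) (INR (N - j)) (INR N + 1)).
     pose proof (pos_INR j); lra. replace 1 with (INR 1) by auto. apply le_INR; lia.
     rewrite minus_INR by lia. ring. right. field. pose proof (pos_INR N). split; lra.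
   + rewrite fs_plus, fs_scal, fs_const. pose proof (pos_INR N).
     assert (fs (fun j => / (INR j + 1) ^ 2) N <= Zeta2). 
     { apply ser_partial_le. intros k. pose proof (INR_S_pos k). apply Rlt_le, Rinv_0_lt_compat; nra. apply Zeta2_ser. }
     apply Rle_trans with (2 / (INR N + 1) * Zeta2 + 4 / (INR N + 1)).
     apply Rplus_le_compat. apply Rmult_le_compat_l; auto. apply Rlt_le, Rdiv_lt_0_compat; lra.
     apply Rle_trans with (INR N * 4 / (INR N + 1)^2). right; field; lra.
     apply Rle_trans with ((INR N + 1) * 4 / (INR N + 1)^2). unfold Rdiv. apply Rmult_le_compat_r.
     apply Rlt_le, Rinv_0_lt_compat; nra. lra. right; field; lra.
     right; field; lra. Qed.

Definition Sa2 y := Series (fun j => ak y j ^ 2).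
Definition Sbc y := Series (fun j => bj y j * (3 / (4 * (INR j + 1)^2))).

Lemma Sa2_bound y k : Rabs (ak y k ^ 2) <= 4 * y^2 * / (INR k + 1)^2.
Proof. pose proof (ak_bound y k). rewrite Rabs_right by (apply Rle_ge, pow2_ge_0).
 assert (Rabs (ak y k) ^ 2 <= (2 * Rabs y * / (INR k + 1) ^ 2)^2).
 { apply pow_incr. split; auto. apply Rabs_pos. }
 rewrite RPow_abs in H0. rewrite Rabs_right in H0 by (apply Rle_ge, pow2_ge_0).
 eapply Rle_trans. exact H0. pose proof (INR_S_pos k).
 assert (/ (INR k + 1)^2 <= 1). { apply Rle_trans with (/1). pose proof (pos_INR k). apply Rinv_le_contravar; nra. rewrite Rinv_1; lra. }
 assert (0 <= / (INR k + 1)^2) by (apply Rlt_le, Rinv_0_lt_compat; nra).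
 replace ((2 * Rabs y * / (INR k + 1) ^ 2) ^ 2) with (4 * (Rabs y)^2 * (/ (INR k + 1) ^ 2 * / (INR k + 1) ^ 2)) by ring.
 rewrite RPow_abs. rewrite Rabs_right by (apply Rle_ge, pow2_ge_0).
 apply Rmult_le_compat_l. pose proof (pow2_ge_0 y); lra. nra. Qed.

Lemma Sa2_ser y : ser (fun j => ak y j ^ 2) (Sa2 y).
Proof. destruct (ser_exists_le (fun j => ak y j ^ 2) _ _ (Sa2_bound y) (invsq_scal_ser (4 * y^2))) as [l Hl].
 unfold Sa2. rewrite (is_series_unique _ l); auto. apply ser_is_series; auto. Qed.

Lemma Sbc_bound y k : Rabs (bj y k * (3 / (4 * (INR k + 1)^2))) <= 1 * / (INR k + 1)^2.
Proof. pose proof (INR_S_pos k). pose proof (pos_INR k). unfold bj. pose proof (den_pos y k).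
 assert (0 < / (y ^ 2 + (INR k + 1) ^ 2)) by (apply Rinv_0_lt_compat; lra).
 assert (/ (y ^ 2 + (INR k + 1) ^ 2) <= 1 * / (INR k + 1)^2). { rewrite Rmult_1_l. apply Rinv_le_contravar; nra. }
 assert (0 < 3 / (4 * (INR k + 1) ^ 2)) by (apply Rdiv_lt_0_compat; nra).
 assert (3 / (4 * (INR k + 1) ^ 2) <= 1). { apply Rle_trans with (3 / 4). unfold Rdiv. apply Rmult_le_compat_l. lra.
   apply Rinv_le_contravar; nra. lra. }
 rewrite Rabs_right by nra. nra. Qed.

Lemma Sbc_ser y : ser (fun j => bj y j * (3 / (4 * (INR j + 1)^2))) (Sbc y).
Proof. destruct (ser_exists_le (fun j => bj y j * (3 / (4 * (INR j + 1)^2))) _ _ (Sbc_bound y) (invsq_scal_ser 1)) as [l Hl].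
 unfold Sbc. rewrite (is_series_unique _ l); auto. apply ser_is_series; auto. Qed.

Lemma A_square y : (A y)^2 = Sa2 y + 8 * y^2 * Sbc y.
Proof.
 assert (H1 : is_lim_seq (fun N => (fs (ak y) N)^2) ((A y)^2)).
 { replace ((A y)^2) with (A y * A y) by ring.
   eapply is_lim_seq_ext; [| apply (is_lim_seq_mult' _ _ _ _ (A_ser y) (A_ser y))]. intros; simpl; ring. }
 assert (H2 : is_lim_seq (fun N => (fs (ak y) N)^2) (Sa2 y + 8 * y^2 * (Sbc y - 0))).
 { eapply is_lim_seq_ext. intros N; symmetry; apply square_fs.
   apply is_lim_seq_plus'. apply Sa2_ser. apply (is_lim_seq_scal_l _ (8 * y^2) (Sbc y - 0)).
   eapply is_lim_seq_ext. 2: apply (is_lim_seq_minus' _ _ _ _ (Sbc_ser y) (err_lim y)).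
   intros N. cbv beta. rewrite <- fs_minus. apply fs_ext. intros j Hj. rewrite (cN_eq j N Hj). ring. }
 apply is_lim_seq_unique in H1. apply is_lim_seq_unique in H2. rewrite H1 in H2. injection H2. intros E. simpl. rewrite E. ring. Qed.

Lemma riccati y : y <> 0 -> B y + 2 * A y / y + (A y)^2 = 6 * Zeta2.
Proof. intros Hy. rewrite A_square.
 replace (B y + 2 * A y / y + (Sa2 y + 8 * y ^ 2 * Sbc y)) with (B y + 2 / y * A y + (Sa2 y + 8 * y ^ 2 * Sbc y)) by (field; auto).
 apply (ser_unique (fun j => 6 * / (INR j + 1)^2)); [|apply ser_scal, Zeta2_ser].
 eapply ser_ext; [|apply (ser_plus _ _ _ _ (ser_plus _ _ _ _ (B_ser y) (ser_scal (2 / y) _ _ (A_ser y)))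
     (ser_plus _ _ _ _ (Sa2_ser y) (ser_scal (8 * y^2) _ _ (Sbc_ser y))))].
 intros j. simpl. unfold dk, ak, bj. pose proof (den_pos y j). pose proof (INR_S_pos j). field. split; lra. Qed.

Definition Cc := 6 * Zeta2.
Definition cc := sqrt Cc.
Lemma Cc_pos : 0 < Cc. Proof. unfold Cc; pose proof Zeta2_pos; lra. Qed.
Lemma cc_pos : 0 < cc. Proof. unfold cc; apply sqrt_lt_R0, Cc_pos. Qed.
Lemma cc_sq : cc * cc = Cc. Proof. unfold cc; apply sqrt_sqrt; pose proof Cc_pos; lra. Qed.

Definition cothf (c y : R) := c * (exp (2 * c * y) + 1) / (exp (2 * c * y) - 1).

Lemma exp_gt1 u : 0 < u -> 1 < exp u.
Proof. intros H. pose proof (exp_ineq1 u). lra. Qed.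

Lemma cothf_derive c y : 0 < c -> 0 < y -> derivable_pt_lim (cothf c) y (c * c - (cothf c y)^2).
Proof. intros Hc Hy. apply is_derive_Reals. unfold cothf.
 assert (1 < exp (2 * c * y)) by (apply exp_gt1; nra).
 auto_derive. lra. field. lra. Qed.

Lemma cothf_bounds t : 0 < t -> 1 - t <= t * (exp (2 * t) + 1) / (exp (2 * t) - 1) <= 1 + t.
Proof. intros Ht. assert (HE : 1 < exp (2 * t)) by (apply exp_gt1; lra).
 pose proof (exp_ineq1_le (2 * t)). pose proof (exp_ineq1_le (- (2 * t))).
 assert (exp (2 * t) * exp (- (2 * t)) = 1) by (rewrite <- exp_plus; replace (2 * t + - (2 * t)) with 0 by ring; apply exp_0).
 split.
 - apply Rmult_le_reg_r with (exp (2 * t) - 1). lra. unfold Rdiv. rewrite Rmult_assoc, Rinv_l by lra. nra.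
 - apply Rmult_le_reg_r with (exp (2 * t) - 1). lra. unfold Rdiv. rewrite Rmult_assoc, Rinv_l by lra. nra. Qed.

Definition gg y := / y + A y.

Lemma gg_derive y : 0 < y -> derivable_pt_lim gg y (Cc - (gg y)^2).
Proof. intros Hy. unfold gg.
 replace (Cc - (/ y + A y)^2) with (- / y^2 + B y).
 2:{ pose proof (riccati y). unfold Cc. rewrite <- H by lra. field. lra. }
 apply (derivable_pt_lim_plus (fun z => / z) A). 
 - apply is_derive_Reals. auto_derive. lra. field. lra.
 - apply A_derive. Qed.

Lemma Dfun_decr s y : 0 < s -> s < y ->
  (y * (gg y - cothf cc y))^2 <= (s * (gg s - cothf cc s))^2.
Proof. intros Hs Hsy.
 set (h := fun z => gg z - cothf cc z).
 set (D := fun z => (z * h z)^2).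
 assert (Hd : forall z, 0 < z -> derivable_pt_lim D z (2 * z * (h z)^2 * (1 - z * (gg z + cothf cc z)))).
 { intros z Hz. unfold D, h.
   assert (H1 := gg_derive z Hz). assert (H2 := cothf_derive cc z cc_pos Hz).
   rewrite cc_sq in H2.
   assert (H3 : derivable_pt_lim (fun z => z * (gg z - cothf cc z)) z
     (1 * (gg z - cothf cc z) + z * ((Cc - gg z ^ 2) - (Cc - cothf cc z ^ 2)))).
   { apply (derivable_pt_lim_mult id (fun z => gg z - cothf cc z)). apply derivable_pt_lim_id.
     apply (derivable_pt_lim_minus gg (cothf cc)); auto. }
   apply is_derive_Reals in H3.
   apply is_derive_Reals.
   assert (H4 := is_derive_pow (fun z => z * (gg z - cothf cc z)) 2 z _ H3).
   replace (2 * z * (gg z - cothf cc z) ^ 2 * (1 - z * (gg z + cothf cc z))) with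
     (INR 2 * (1 * (gg z - cothf cc z) + z * (Cc - gg z ^ 2 - (Cc - cothf cc z ^ 2))) * (z * (gg z - cothf cc z)) ^ Init.Nat.pred 2)
     by (simpl; ring).
   exact H4. }
 destruct (MVT_cor2 D (fun z => 2 * z * (h z)^2 * (1 - z * (gg z + cothf cc z))) s y Hsy) as [w [Hw1 Hw2]].
 { intros w Hw. apply Hd. lra. }
 assert (0 <= A w) by (apply A_nonneg; lra).
 assert (0 < cothf cc w).
 { unfold cothf. pose proof cc_pos. assert (1 < exp (2 * cc * w)) by (apply exp_gt1; nra).
   apply Rdiv_lt_0_compat; nra. }
 assert (w * gg w = 1 + w * A w) by (unfold gg; field; lra).
 assert (0 <= w * A w) by nra.
 assert (2 * w * (h w)^2 * (1 - w * (gg w + cothf cc w)) <= 0).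
 { assert (0 <= 2 * w * (h w)^2) by (pose proof (pow2_ge_0 (h w)); nra).
   assert (0 < w * cothf cc w) by (apply Rmult_lt_0_compat; lra).
   assert (1 - w * (gg w + cothf cc w) <= 0) by nra. nra. }
 assert (Hp : (2 * w * (h w)^2 * (1 - w * (gg w + cothf cc w))) * (y - s) <= 0).
 { rewrite <- (Rmult_0_l (y - s)). apply Rmult_le_compat_r; lra. }
 unfold D, h in *. lra. Qed.

Lemma small_bound s : 0 < s -> Rabs (s * (gg s - cothf cc s)) <= s * (2 * s * Zeta2 + cc).
Proof. intros Hs. pose proof (A_le_zeta s (Rlt_le _ _ Hs)). pose proof (A_nonneg s (Rlt_le _ _ Hs)).
 pose proof (cothf_bounds (cc * s)). pose proof cc_pos.
 assert (s * cothf cc s = cc * s * (exp (2 * (cc * s)) + 1) / (exp (2 * (cc * s)) - 1)).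
 { unfold cothf. replace (2 * (cc * s)) with (2 * cc * s) by ring. field.
   assert (1 < exp (2 * cc * s)) by (apply exp_gt1; nra). lra. }
 assert (s * gg s = 1 + s * A s) by (unfold gg; field; lra).
 destruct H1 as [H1a H1b]. nra.
 apply Rabs_le. nra. Qed.

Lemma gg_eq y : 0 < y -> gg y = cothf cc y.
Proof. intros Hy. set (K := 2 * Zeta2 + cc). assert (HK : 0 < K) by (unfold K; pose proof Zeta2_pos; pose proof cc_pos; lra).
 set (m := Rmin (y/2) 1). assert (Hm : 0 < m) by (unfold m; apply Rmin_pos; lra).
 assert (Hm1 : m <= 1) by apply Rmin_r. assert (Hm2 : m <= y/2) by apply Rmin_l.
 assert (HD : (y * (gg y - cothf cc y))^2 <= 0).
 { apply (le_of_approx _ _ ((m * K)^2)). apply pow2_ge_0. intros n.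
   set (s := m / (INR n + 1)). pose proof (INR_S_pos n).
   assert (Hs : 0 < s) by (apply Rdiv_lt_0_compat; lra).
   assert (Hs1 : s <= m). { unfold s. apply Rmult_le_reg_r with (INR n + 1). lra. unfold Rdiv. rewrite Rmult_assoc, Rinv_l by lra. pose proof (pos_INR n). nra. }
   pose proof (Dfun_decr s y Hs ltac:(lra)).
   pose proof (small_bound s Hs).
   assert (Rabs (s * (gg s - cothf cc s)) <= s * K).
   { eapply Rle_trans. exact H1. apply Rmult_le_compat_l. lra. unfold K. pose proof Zeta2_pos. nra. }
   assert ((s * (gg s - cothf cc s))^2 <= (s * K)^2).
   { rewrite <- pow2_abs. apply pow_incr. split; auto. apply Rabs_pos. }
   assert ((s * K)^2 = (m * K)^2 / (INR n + 1)^2) by (unfold s; field; lra).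
   assert ((m * K)^2 / (INR n + 1)^2 <= (m * K)^2 / (INR n + 1)).
   { unfold Rdiv. apply Rmult_le_compat_l. apply pow2_ge_0. apply Rinv_le_contravar. lra. pose proof (pos_INR n). nra. }
   lra. }
 assert ((y * (gg y - cothf cc y)) = 0). { pose proof (pow2_ge_0 (y * (gg y - cothf cc y))). 
   apply Rsqr_0_uniq. unfold Rsqr. simpl in HD. lra. }
 apply Rmult_integral in H. destruct H. lra. lra. Qed.

Lemma cc_eq_pi : cc = PI.
Proof.
 assert (Hb : forall y, 0 < y -> Rabs (PI - cc) <= 3 / y).
 { intros y Hy. pose proof (gg_eq y Hy). pose proof (A_bounds y Hy). unfold gg in H.
   pose proof cc_pos. assert (HE : 1 < exp (2 * cc * y)) by (apply exp_gt1; nra).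
   pose proof (exp_ineq1_le (2 * cc * y)).
   assert (cothf cc y = cc + 2 * cc / (exp (2 * cc * y) - 1)) by (unfold cothf; field; lra).
   assert (0 <= 2 * cc / (exp (2 * cc * y) - 1)) by (apply Rdiv_le_0_compat; lra).
   assert (2 * cc / (exp (2 * cc * y) - 1) <= / y).
   { apply Rle_trans with (2 * cc / (2 * cc * y)). unfold Rdiv; apply Rmult_le_compat_l; [lra| apply Rinv_le_contravar; nra].
     right; field; lra. }
   unfold Rdiv in *. apply Rabs_le. split; lra. }
 assert (Rabs (PI - cc) <= 0).
 { apply (le_of_approx _ _ 3). lra. intros n. pose proof (Hb (INR n + 1) (INR_S_pos n)). lra. }
 pose proof (Rabs_pos (PI - cc)). assert (Rabs (PI - cc) = 0) by lra.
 apply Rabs_eq_0 in H1. lra. Qed.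

Theorem partial_fraction y : 0 < y -> / y + A y = PI * (exp (2 * PI * y) + 1) / (exp (2 * PI * y) - 1).
Proof. intros Hy. pose proof (gg_eq y Hy). unfold gg, cothf in H. rewrite cc_eq_pi in H. exact H. Qed.

Theorem zeta2_val : Zeta2 = PI^2 / 6.
Proof. pose proof cc_sq. rewrite cc_eq_pi in H. unfold Cc in H. simpl. lra. Qed.

Definition ell (a : R) (k : nat) := / ((INR k + 1) * (exp ((INR k + 1) * a) - 1)).
Definition lam (a : R) := Series (ell a).

Lemma ell_pos a k : 0 < a -> 0 < ell a k.
Proof. intros Ha. unfold ell. pose proof (INR_S_pos k). assert (1 < exp ((INR k + 1) * a)) by (apply exp_gt1; nra).
 apply Rinv_0_lt_compat. nra. Qed.

Lemma ell_bound a k : 0 < a -> Rabs (ell a k) <= / a * / (INR k + 1)^2.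
Proof. intros Ha. rewrite Rabs_right by (apply Rle_ge, Rlt_le, ell_pos; auto). unfold ell. pose proof (INR_S_pos k).
 pose proof (exp_ineq1_le ((INR k + 1) * a)).
 rewrite <- Rinv_mult. apply Rinv_le_contravar. apply Rmult_lt_0_compat; nra. 
 apply Rle_trans with ((INR k + 1) * ((INR k + 1) * a)). nra. apply Rmult_le_compat_l; lra. Qed.

Lemma lam_ser a : 0 < a -> ser (ell a) (lam a).
Proof. intros Ha. destruct (ser_exists_le (ell a) _ _ (fun k => ell_bound a k Ha) (invsq_scal_ser (/ a))) as [l Hl]; auto.
 unfold lam. rewrite (is_series_unique _ l); auto. apply ser_is_series; auto. Qed.

Lemma lam_decr a b : 0 < a -> a <= b -> lam b <= lam a.
Proof. intros Ha Hab. apply (ser_le (ell b) (ell a)); [|apply lam_ser; lra|apply lam_ser; lra].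
 intros k. unfold ell. pose proof (INR_S_pos k).
 assert (1 < exp ((INR k + 1) * a)) by (apply exp_gt1; nra).
 assert (exp ((INR k + 1) * a) <= exp ((INR k + 1) * b)).
 { destruct (Req_dec a b). subst; lra. left. apply exp_increasing. apply Rmult_lt_compat_l; lra. }
 apply Rinv_le_contravar. nra. apply Rmult_le_compat_l; lra. Qed.

Definition Wf (a : R) (k : nat) := / (a^2 + (INR k + 1)^2).
Lemma W_ser a : 0 < a -> ser (Wf a) (A a / (2 * a)).
Proof. intros Ha. replace (A a / (2 * a)) with (/ (2 * a) * A a) by (field; lra). eapply ser_ext; [|apply (ser_scal (/ (2 * a))); apply A_ser].
 intros k. unfold Wf, ak. pose proof (den_pos a k). field. split; lra. 
 Qed.

Definition Wt a m := A a / (2 * a) - fs (Wf a) m.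
Lemma Wt_ser a m : 0 < a -> ser (fun k => Wf a (m + k)) (Wt a m).
Proof. intros Ha. apply ser_shift. apply W_ser; auto. Qed.

Lemma Wt_bounds a m : 0 < a -> (1 <= m)%nat ->
  atan (a / (INR m + 1)) / a <= Wt a m <= atan (a / INR m) / a.
Proof. intros Ha Hm. destruct (tail_ser a m Ha) as [T [HT [H1 H2]]].
 assert (T = Wt a m).
 { apply (ser_unique (fun k => Wf a (m + k))); [|apply Wt_ser; auto]. eapply ser_ext; [|exact HT].
   intros k. unfold Wf. f_equal. f_equal. f_equal. rewrite <- S_INR. f_equal. lia. }
 subst T. assert (0 < INR m) by (apply lt_0_INR; lia). pose proof (pos_INR m).
 rewrite (pi_half_minus_atan ((INR m + 1)/a)) in H1 by (apply Rdiv_lt_0_compat; lra).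
 rewrite (pi_half_minus_atan (INR m / a)) in H2 by (apply Rdiv_lt_0_compat; lra).
 rewrite Rinv_div in H1, H2. split; lra. Qed.

Definition Uxx x n k := / ((INR n + 1)^2 * x^2 + (INR k + 1)^2).

Lemma A_pf y : 0 < y -> A y = PI * (exp (2 * PI * y) + 1) / (exp (2 * PI * y) - 1) - / y.
Proof. intros Hy. rewrite <- partial_fraction by auto. ring. Qed.

Lemma ell_expand1 x n M : 0 < x ->
  ell (2 * PI * x) n = / (2 * PI * (INR n + 1)^2 * x) - / (2 * (INR n + 1))
    + x / PI * (fs (Uxx x n) M + Wt ((INR n + 1) * x) M).
Proof. intros Hx. set (y := (INR n + 1) * x). pose proof (INR_S_pos n). pose proof PI_RGT_0.
 assert (Hy : 0 < y) by (unfold y; nra).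
 rewrite (fs_ext (Uxx x n) (Wf y)). 2:{ intros k _. unfold Uxx, Wf, y. f_equal. ring. }
 unfold Wt. replace (fs (Wf y) M + (A y / (2 * y) - fs (Wf y) M)) with (A y / (2 * y)) by ring.
 rewrite A_pf by auto. unfold ell.
 replace ((INR n + 1) * (2 * PI * x)) with (2 * PI * y) by (unfold y; ring).
 assert (1 < exp (2 * PI * y)) by (apply exp_gt1; nra).
 unfold y in *. field. repeat split; try lra; try nra. Qed.

Lemma ell_expand2 x m N : 0 < x ->
  ell (2 * PI / x) m = x / (2 * PI * (INR m + 1)^2) - / (2 * (INR m + 1))
    + x / PI * (fs (fun k => Uxx x k m) N + Wt ((INR m + 1) / x) N / x^2).
Proof. intros Hx. set (y := (INR m + 1) / x). pose proof (INR_S_pos m). pose proof PI_RGT_0.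
 assert (Hy : 0 < y) by (unfold y; apply Rdiv_lt_0_compat; lra).
 rewrite (fs_ext (fun k => Uxx x k m) (fun k => / x^2 * Wf y k)). 
 2:{ intros k _. unfold Uxx, Wf, y. pose proof (INR_S_pos k). assert (0 < (INR m + 1)^2 * x^2) by (apply Rmult_lt_0_compat; nra).
   assert (0 < ((INR m + 1) / x)^2 + (INR k + 1)^2). { assert (0 < (INR m + 1) / x) by (apply Rdiv_lt_0_compat; lra). nra. }
   assert (0 < (INR m + 1) ^ 2 + ((INR k + 1) * x) ^ 2) by (pose proof (pow2_ge_0 ((INR k + 1) * x)); nra).
   field. repeat split; try lra. }
 rewrite fs_scal.
 unfold Wt. replace (/ x ^ 2 * fs (Wf y) N + (A y / (2 * y) - fs (Wf y) N) / x ^ 2) with (A y / (2 * y) / x^2) by (field; lra).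
 rewrite A_pf by auto. unfold ell.
 replace ((INR m + 1) * (2 * PI / x)) with (2 * PI * y) by (unfold y; field; lra).
 assert (1 < exp (2 * PI * y)) by (apply exp_gt1; nra).
 unfold y in *. field. repeat split; try lra; try nra. Qed.

Definition Zs N := fs (fun k => / (INR k + 1)^2) N.

Lemma fs_diff x N M : 0 < x ->
  fs (ell (2 * PI * x)) N - fs (ell (2 * PI / x)) M =
  Zs N / (2 * PI * x) - x * Zs M / (2 * PI) + (Hn M - Hn N) / 2
  + x / PI * (fs (fun n => Wt ((INR n + 1) * x) M) N - fs (fun m => Wt ((INR m + 1) / x) N / x^2) M).
Proof. intros Hx. pose proof PI_RGT_0.
 rewrite (fs_ext _ _ N (fun n _ => ell_expand1 x n M Hx)).
 rewrite (fs_ext _ _ M (fun m _ => ell_expand2 x m N Hx)).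
 rewrite !fs_plus, !fs_minus, !fs_scal, !fs_plus.
 rewrite (fs_swap (fun n k => Uxx x n k)).
 unfold Zs, Hn.
 replace (fs (fun n => / (2 * PI * (INR n + 1) ^ 2 * x)) N) with (/ (2 * PI * x) * fs (fun k => / (INR k + 1) ^ 2) N).
 2:{ rewrite <- fs_scal. apply fs_ext. intros k _. pose proof (INR_S_pos k). field. repeat split; lra. }
 replace (fs (fun m => x / (2 * PI * (INR m + 1) ^ 2)) M) with (x / (2 * PI) * fs (fun k => / (INR k + 1) ^ 2) M).
 2:{ rewrite <- fs_scal. apply fs_ext. intros k _. pose proof (INR_S_pos k). field. repeat split; lra. }
 replace (fs (fun n => / (2 * (INR n + 1))) N) with (/ 2 * fs (fun i => / (INR i + 1)) N).
 2:{ rewrite <- fs_scal. apply fs_ext. intros k _. pose proof (INR_S_pos k). field. lra. }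
 replace (fs (fun n => / (2 * (INR n + 1))) M) with (/ 2 * fs (fun i => / (INR i + 1)) M).
 2:{ rewrite <- fs_scal. apply fs_ext. intros k _. pose proof (INR_S_pos k). field. lra. }
 field. lra. Qed.

Lemma ln_le' x y : 0 < x -> x <= y -> ln x <= ln y.
Proof. intros Hx Hxy. destruct (Req_dec x y). subst; lra. left; apply ln_increasing; lra. Qed.
Lemma ln_div' x y : 0 < x -> 0 < y -> ln (x / y) = ln x - ln y.
Proof. intros. unfold Rdiv. rewrite ln_mult, ln_Rinv; try lra. apply Rinv_0_lt_compat; auto. Qed.
Lemma ln_1pu u : 0 < 1 + u -> ln (1 + u) <= u.
Proof. intros H. rewrite <- (ln_exp u) at 2. apply ln_le'; auto. apply exp_ineq1_le. Qed.

Lemma H_step B : 0 < B -> ln (B + 2) - ln (B + 1) <= / (B + 1) <= ln (B + 1) - ln B.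
Proof. intros HB. split.
 - rewrite <- ln_div' by lra. replace ((B + 2) / (B + 1)) with (1 + / (B + 1)) by (field; lra).
   apply ln_1pu. assert (0 < / (B + 1)) by (apply Rinv_0_lt_compat; lra). lra.
 - assert (ln (B / (B + 1)) <= - / (B + 1)).
   { replace (B / (B + 1)) with (1 + - / (B + 1)) by (field; lra). apply ln_1pu.
     replace (1 + - / (B + 1)) with (B / (B + 1)) by (field; lra). apply Rdiv_lt_0_compat; lra. }
   rewrite ln_div' in H by lra. lra. Qed.

Lemma H_bounds b d : (1 <= b)%nat ->
  ln (INR (b + d) + 1) - ln (INR b + 1) <= Hn (b + d) - Hn b <= ln (INR (b + d)) - ln (INR b).
Proof. intros Hb. induction d.
 - rewrite Nat.add_0_r. lra.
 - rewrite Nat.add_succ_r. unfold Hn in *. simpl fs. rewrite S_INR.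
   assert (0 < INR (b + d)) by (apply lt_0_INR; lia).
   pose proof (H_step (INR (b + d)) H).
   replace (INR (b + d) + 1 + 1) with (INR (b + d) + 2) by ring. lra. Qed.

Lemma H_approx a b : (1 <= b)%nat -> (b <= a)%nat ->
  Rabs (Hn a - Hn b - ln (INR a / INR b)) <= / INR b.
Proof. intros Hb Hab. replace a with (b + (a - b))%nat by lia. set (d := (a - b)%nat).
 pose proof (H_bounds b d Hb). assert (0 < INR b) by (apply lt_0_INR; lia).
 assert (INR b <= INR (b + d)) by (apply le_INR; lia).
 rewrite ln_div' by lra.
 assert (ln (INR (b + d) + 1) - ln (INR (b + d)) >= 0).
 { assert (ln (INR (b + d)) <= ln (INR (b + d) + 1)) by (apply ln_le'; lra). lra. }
 assert (ln (INR b + 1) - ln (INR b) <= / INR b).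
 { rewrite <- ln_div' by lra. replace ((INR b + 1) / INR b) with (1 + / INR b) by (field; lra).
   apply ln_1pu. assert (0 < / INR b) by (apply Rinv_0_lt_compat; lra). lra. }
 apply Rabs_le. split; lra. Qed.

Definition Rs m := fs (fun n => atan ((INR n + 1) / INR m) / (INR n + 1)) m.

Lemma Rs_nonneg_term m n : (1 <= m)%nat -> 0 <= atan ((INR n + 1) / INR m) / (INR n + 1).
Proof. intros Hm. assert (0 < INR m) by (apply lt_0_INR; lia). pose proof (INR_S_pos n).
 apply Rdiv_le_0_compat; auto. apply atan_nonneg. apply Rlt_le, Rdiv_lt_0_compat; lra. Qed.

Lemma Rs_block m l : (1 <= m)%nat -> (1 <= l)%nat -> Rs m <= Rs (m * l) <= Rs m + / INR m.
Proof. intros Hm Hl. unfold Rs. rewrite fs_block.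
 assert (HmR : 0 < INR m) by (apply lt_0_INR; lia). assert (HlR : 0 < INR l) by (apply lt_0_INR; lia).
 assert (Hml : INR (m * l) = INR m * INR l) by apply mult_INR.
 set (g := fun i => atan ((INR i + 1) / INR m) / (INR i + 1)).
 set (f := fun n => atan ((INR n + 1) / INR (m * l)) / (INR n + 1)).
 split.
 - apply fs_le. intros i Hi. fold (g i).
   replace (g i) with (fs (fun _ => g i / INR l) l) by (rewrite fs_const; field; lra).
   apply fs_le. intros r Hr. fold (f (i * l + r)%nat). unfold f, g.
   set (n := (i * l + r)%nat). pose proof (INR_S_pos n). pose proof (INR_S_pos i).
   set (a := (INR n + 1) / INR (m * l)). set (b := (INR i + 1) / INR m).
   assert (Ha : 0 < a) by (unfold a; apply Rdiv_lt_0_compat; [lra| rewrite Hml; nra]).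
   assert (Hnl : INR n + 1 <= (INR i + 1) * INR l).
   { replace (INR n + 1) with (INR (n + 1)) by (rewrite plus_INR; simpl; ring).
     rewrite <- S_INR, <- mult_INR. apply le_INR. unfold n. nia. }
   assert (Hab : a <= b). { unfold a, b. rewrite Hml. apply Rmult_le_reg_r with (INR m * INR l). nra.
     unfold Rdiv. rewrite Rmult_assoc, Rinv_l by nra. field_simplify; nra. }
   pose proof (psi_decr a b Ha Hab).
   assert (E1 : a * (INR m * INR l) = INR n + 1) by (unfold a; rewrite Hml; field; lra).
   assert (E2 : b * INR m = INR i + 1) by (unfold b; field; lra).
   apply Rmult_le_reg_r with ((INR n + 1) * (INR l * (INR i + 1))). apply Rmult_lt_0_compat; [lra| apply Rmult_lt_0_compat; lra].
   replace (atan b / (INR i + 1) / INR l * ((INR n + 1) * (INR l * (INR i + 1)))) with (atan b * (INR n + 1)) by (field; lra).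
   replace (atan a / (INR n + 1) * ((INR n + 1) * (INR l * (INR i + 1)))) with (atan a * (INR l * (INR i + 1))) by (field; lra).
   rewrite <- E1, <- E2. nra.
 - destruct m as [|m']; [lia|]. rewrite fs_first.
   assert (B0 : fs (fun r => f (0 * l + r)%nat) l <= / INR (S m')).
   { apply Rle_trans with (fs (fun _ => / INR (S m' * l)) l).
     apply fs_le. intros r _. unfold f. pose proof (INR_S_pos (0 * l + r)). 
     set (u := (INR (0 * l + r) + 1) / INR (S m' * l)).
     assert (0 < u) by (unfold u; apply Rdiv_lt_0_compat; [lra|rewrite Hml; nra]).
     pose proof (atan_le_id u (Rlt_le _ _ H0)).
     apply Rle_trans with (u / (INR (0 * l + r) + 1)). unfold Rdiv at 1 2. apply Rmult_le_compat_r; auto.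
     apply Rlt_le, Rinv_0_lt_compat; lra. right. unfold u. field. rewrite Hml. split; nra.
     rewrite fs_const. rewrite Hml. right. field. split; lra. }
   assert (B1 : fs (fun i => fs (fun r => f (S i * l + r)%nat) l) m' <= fs g m').
   { apply fs_le. intros i Hi.
     replace (g i) with (fs (fun _ => g i / INR l) l) by (rewrite fs_const; field; lra).
     apply fs_le. intros r Hr. unfold f, g.
     set (n := (S i * l + r)%nat). pose proof (INR_S_pos n). pose proof (INR_S_pos i).
     set (a := (INR n + 1) / INR (S m' * l)). set (b := (INR i + 1) / INR (S m')).
     assert (Hb : 0 < b) by (unfold b; apply Rdiv_lt_0_compat; lra).
     assert (Hnl : (INR i + 1) * INR l <= INR n + 1).
     { replace (INR n + 1) with (INR (n + 1)) by (rewrite plus_INR; simpl; ring).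
       rewrite <- S_INR, <- mult_INR. apply le_INR. unfold n. simpl. nia. }
     assert (Hab : b <= a). { unfold a, b. rewrite Hml. replace ((INR i + 1) / INR (S m')) with (((INR i + 1) * INR l) / (INR (S m') * INR l)) by (field; lra).
       unfold Rdiv. apply Rmult_le_compat_r. apply Rlt_le, Rinv_0_lt_compat; nra. lra. }
     pose proof (psi_decr b a Hb Hab).
     assert (E1 : a * (INR (S m') * INR l) = INR n + 1) by (unfold a; rewrite Hml; field; lra).
     assert (E2 : b * INR (S m') = INR i + 1) by (unfold b; field; lra).
     apply Rmult_le_reg_r with ((INR n + 1) * (INR l * (INR i + 1))). apply Rmult_lt_0_compat; [lra| apply Rmult_lt_0_compat; lra].
     replace (atan b / (INR i + 1) / INR l * ((INR n + 1) * (INR l * (INR i + 1)))) with (atan b * (INR n + 1)) by (field; lra).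
     replace (atan a / (INR n + 1) * ((INR n + 1) * (INR l * (INR i + 1)))) with (atan a * (INR l * (INR i + 1))) by (field; lra).
     rewrite <- E1, <- E2. nra. }
   assert (B2 : fs g m' <= fs g (S m')).
   { simpl. assert (0 <= g m') by (apply Rs_nonneg_term; lia). lra. }
   unfold f in B0, B1. lra. Qed.

Lemma Rs_close p q T : (1 <= p)%nat -> (1 <= q)%nat -> (1 <= T)%nat ->
  Rabs (Rs (q * T) - Rs (p * T)) <= / INR (q * T) + / INR (p * T).
Proof. intros Hp Hq HT.
 destruct (Rs_block (q * T) p) as [H1 H2]; try nia.
 destruct (Rs_block (p * T) q) as [H3 H4]; try nia.
 replace (p * T * q)%nat with (q * T * p)%nat in H3, H4 by lia.
 assert (0 < / INR (q * T)) by (apply Rinv_0_lt_compat, lt_0_INR; nia).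
 assert (0 < / INR (p * T)) by (apply Rinv_0_lt_compat, lt_0_INR; nia).
 apply Rabs_le; split; lra. Qed.

Lemma Wt_approx a m c : 0 < a -> (1 <= m)%nat -> a / INR m = c ->
  atan c / a - (/ INR m - / (INR m + 1)) <= Wt a m <= atan c / a.
Proof. intros Ha Hm Hc. destruct (Wt_bounds a m Ha Hm) as [H1 H2]. rewrite Hc in H2. split; auto.
 assert (HmR : 0 < INR m) by (apply lt_0_INR; lia).
 assert (0 <= a / (INR m + 1)) by (apply Rlt_le, Rdiv_lt_0_compat; lra).
 assert (a / (INR m + 1) <= c). { rewrite <- Hc. unfold Rdiv. apply Rmult_le_compat_l. lra. apply Rinv_le_contravar; lra. }
 pose proof (atan_lip c (a / (INR m + 1)) H H0).
 assert ((c - a / (INR m + 1)) / a = / INR m - / (INR m + 1)) by (rewrite <- Hc; field; lra).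
 assert (atan c / a - atan (a / (INR m + 1)) / a <= (c - a / (INR m + 1)) / a).
 { replace (atan c / a - atan (a / (INR m + 1)) / a) with ((atan c - atan (a / (INR m + 1))) / a) by (field; lra).
   unfold Rdiv. apply Rmult_le_compat_r; auto. apply Rlt_le, Rinv_0_lt_compat; auto. }
 lra. Qed.

Lemma inv_gap m : (1 <= m)%nat -> 0 <= / INR m - / (INR m + 1) <= / (INR m)^2.
Proof. intros Hm. assert (HmR : 1 <= INR m) by (replace 1 with (INR 1) by auto; apply le_INR; lia).
 replace (/ INR m - / (INR m + 1)) with (/ (INR m * (INR m + 1))) by (field; lra). split.
 apply Rlt_le, Rinv_0_lt_compat; nra. apply Rinv_le_contravar; nra. Qed.

Section Rat.
Variables p q T : nat.
Hypotheses (Hp : (1 <= p)%nat) (Hq : (1 <= q)%nat) (HT : (1 <= T)%nat).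
Let x := INR p / INR q.
Let N := (q * T)%nat.
Let M := (p * T)%nat.

Lemma HpR : 1 <= INR p. Proof. replace 1 with (INR 1) by auto; apply le_INR; lia. Qed.
Lemma HqR : 1 <= INR q. Proof. replace 1 with (INR 1) by auto; apply le_INR; lia. Qed.
Lemma HTR : 1 <= INR T. Proof. replace 1 with (INR 1) by auto; apply le_INR; lia. Qed.
Lemma Hx : 0 < x. Proof. unfold x. pose proof HpR; pose proof HqR. apply Rdiv_lt_0_compat; lra. Qed.
Lemma NR : INR N = INR q * INR T. Proof. unfold N. apply mult_INR. Qed.
Lemma MR : INR M = INR p * INR T. Proof. unfold M. apply mult_INR. Qed.

Lemma S1_bounds : / x * Rs N - INR N / (INR M)^2 <= fs (fun n => Wt ((INR n + 1) * x) M) N <= / x * Rs N.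
Proof. pose proof HpR; pose proof HqR; pose proof HTR; pose proof Hx. pose proof NR; pose proof MR.
 assert (HMp : 0 < INR M) by (rewrite MR; nra). assert (HNp : 0 < INR N) by (rewrite NR; nra).
 assert (HM : (1 <= M)%nat) by (unfold M; nia).
 unfold Rs. rewrite <- fs_scal.
 assert (Ht : forall n, / x * (atan ((INR n + 1) / INR N) / (INR n + 1)) - / (INR M)^2 <= Wt ((INR n + 1) * x) M
     <= / x * (atan ((INR n + 1) / INR N) / (INR n + 1))).
 { intros n. pose proof (INR_S_pos n).
   destruct (Wt_approx ((INR n + 1) * x) M ((INR n + 1) / INR N)) as [A1 A2]; auto. nra.
   rewrite H3, H4. unfold x. field. repeat split; lra.
   replace (atan ((INR n + 1) / INR N) / ((INR n + 1) * x)) with (/ x * (atan ((INR n + 1) / INR N) / (INR n + 1))) in A1, A2 by (field; lra).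
   pose proof (inv_gap M HM). lra. }
 split.
 - replace (INR N / INR M ^ 2) with (fs (fun _ => / INR M ^ 2) N) by (rewrite fs_const; field; lra).
   rewrite <- fs_minus. apply fs_le. intros n _. apply Ht.
 - apply fs_le. intros n _. apply Ht. Qed.

Lemma S2_bounds : / x * Rs M - INR M / (x^2 * (INR N)^2) <= fs (fun m => Wt ((INR m + 1) / x) N / x^2) M <= / x * Rs M.
Proof. pose proof HpR; pose proof HqR; pose proof HTR; pose proof Hx. pose proof NR; pose proof MR.
 assert (HMp : 0 < INR M) by (rewrite MR; nra). assert (HNp : 0 < INR N) by (rewrite NR; nra).
 assert (HN : (1 <= N)%nat) by (unfold N; nia).
 unfold Rs. rewrite <- fs_scal.
 assert (Ht : forall m, / x * (atan ((INR m + 1) / INR M) / (INR m + 1)) - / (x^2 * (INR N)^2) <= Wt ((INR m + 1) / x) N / x^2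
     <= / x * (atan ((INR m + 1) / INR M) / (INR m + 1))).
 { intros m. pose proof (INR_S_pos m).
   destruct (Wt_approx ((INR m + 1) / x) N ((INR m + 1) / INR M)) as [A1 A2]; auto. apply Rdiv_lt_0_compat; lra.
   rewrite H3, H4. unfold x. field. repeat split; lra.
   pose proof (inv_gap N HN).
   assert (0 < / x^2) by (apply Rinv_0_lt_compat; nra).
   replace (atan ((INR m + 1) / INR M) / ((INR m + 1) / x)) with (x^2 * (/ x * (atan ((INR m + 1) / INR M) / (INR m + 1)))) in A1, A2 by (field; lra).
   replace (/ (x ^ 2 * INR N ^ 2)) with (/ x^2 * / INR N ^ 2) by (field; lra).
   split.
   - set (g := atan ((INR m + 1) / INR M) / (INR m + 1)) in *.
     apply Rle_trans with ((x ^ 2 * (/ x * g) - (/ INR N - / (INR N + 1))) / x^2).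
     apply Rle_trans with (/ x * g - / x^2 * (/ INR N - / (INR N + 1))).
     assert (/ x^2 * (/ INR N - / (INR N + 1)) <= / x ^ 2 * / INR N ^ 2) by (apply Rmult_le_compat_l; lra). lra.
     right; field; lra. unfold Rdiv; apply Rmult_le_compat_r; lra.
   - apply Rle_trans with ((x ^ 2 * (/ x * (atan ((INR m + 1) / INR M) / (INR m + 1)))) / x^2).
     unfold Rdiv; apply Rmult_le_compat_r; lra. right; field; lra. }
 split.
 - replace (INR M / (x ^ 2 * INR N ^ 2)) with (fs (fun _ => / (x ^ 2 * INR N ^ 2)) M) by (rewrite fs_const; field; lra).
   rewrite <- fs_minus. apply fs_le. intros n _. apply Ht.
 - apply fs_le. intros n _. apply Ht. Qed.

Lemma main_bound :
  Rabs (fs (ell (2 * PI * x)) N - fs (ell (2 * PI / x)) M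
        - (Zs N / (2 * PI * x) - x * Zs M / (2 * PI) + ln x / 2)) <= 4 / INR T.
Proof. pose proof HpR; pose proof HqR; pose proof HTR; pose proof Hx. pose proof NR; pose proof MR.
 assert (HMp : 0 < INR M) by (rewrite MR; nra). assert (HNp : 0 < INR N) by (rewrite NR; nra).
 pose proof PI2_1.
 rewrite fs_diff by auto.
 pose proof S1_bounds. pose proof S2_bounds.
 pose proof (Rs_close p q T Hp Hq HT). fold N M in H8.
 assert (HH : Rabs ((Hn M - Hn N) - ln x) <= / INR T).
 { destruct (Compare_dec.le_lt_dec N M).
   - assert (Hr := H_approx M N ltac:(unfold N; nia) l).
     replace (INR M / INR N) with x in Hr by (rewrite H3, H4; unfold x; field; lra).
     eapply Rle_trans. exact Hr. apply Rinv_le_contravar. lra. rewrite H3. nra.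
   - assert (Hr := H_approx N M ltac:(unfold M; nia) ltac:(lia)).
     replace (INR N / INR M) with (/ x) in Hr by (rewrite H3, H4; unfold x; field; lra).
     rewrite ln_Rinv in Hr by auto. rewrite <- Rabs_Ropp. replace (- (Hn M - Hn N - ln x)) with (Hn N - Hn M - - ln x) by ring.
     eapply Rle_trans. exact Hr. apply Rinv_le_contravar. lra. rewrite H4. nra. }
 set (S1 := fs (fun n => Wt ((INR n + 1) * x) M) N) in *.
 set (S2 := fs (fun m => Wt ((INR m + 1) / x) N / x ^ 2) M) in *.
 assert (E1 : x / PI * (INR N / INR M ^ 2) <= / INR T).
 { rewrite H3, H4. unfold x. apply Rle_trans with (/ (PI * INR p * INR T)). right; field; repeat split; lra.
   apply Rinv_le_contravar; nra. }
 assert (E2 : x / PI * (INR M / (x ^ 2 * INR N ^ 2)) <= / INR T).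
 { rewrite H3, H4. unfold x. apply Rle_trans with (/ (PI * INR q * INR T)). right; field; repeat split; lra.
   apply Rinv_le_contravar; nra. }
 assert (E3 : / PI * (/ INR N + / INR M) <= / INR T).
 { rewrite H3, H4. apply Rle_trans with (/ PI * (/ INR T + / INR T)).
   apply Rmult_le_compat_l. apply Rlt_le, Rinv_0_lt_compat; lra.
   apply Rplus_le_compat; apply Rinv_le_contravar; nra.
   apply Rle_trans with (2 / PI * / INR T). right; field; lra.
   rewrite <- (Rmult_1_l (/ INR T)) at 2. apply Rmult_le_compat_r. apply Rlt_le, Rinv_0_lt_compat; lra.
   apply Rle_trans with (2 / 2). unfold Rdiv. apply Rmult_le_compat_l. lra. apply Rinv_le_contravar; lra. lra. }
 assert (K : x / PI * (S1 - S2) - / PI * (Rs N - Rs M) = x / PI * ((S1 - / x * Rs N) - (S2 - / x * Rs M))) by (field; lra).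
 assert (Hxp : 0 < x / PI) by (apply Rdiv_lt_0_compat; lra).
 assert (Rabs (x / PI * (S1 - S2) - / PI * (Rs N - Rs M)) <= 2 / INR T).
 { rewrite K. rewrite Rabs_mult, Rabs_right by lra.
   apply Rle_trans with (x / PI * (INR N / INR M ^ 2 + INR M / (x ^ 2 * INR N ^ 2))).
   apply Rmult_le_compat_l. lra. apply Rabs_le. split; lra.
   rewrite Rmult_plus_distr_l. unfold Rdiv at 5. lra. }
 assert (Rabs (/ PI * (Rs N - Rs M)) <= / INR T).
 { rewrite Rabs_mult, Rabs_right by (apply Rle_ge, Rlt_le, Rinv_0_lt_compat; lra).
   eapply Rle_trans; [|exact E3]. apply Rmult_le_compat_l; auto. apply Rlt_le, Rinv_0_lt_compat; lra. }
 replace (Zs N / (2 * PI * x) - x * Zs M / (2 * PI) + (Hn M - Hn N) / 2 + x / PI * (S1 - S2) -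
   (Zs N / (2 * PI * x) - x * Zs M / (2 * PI) + ln x / 2)) with
   (((Hn M - Hn N) - ln x) / 2 + (x / PI * (S1 - S2) - / PI * (Rs N - Rs M)) + / PI * (Rs N - Rs M)) by lra.
 eapply Rle_trans. apply Rabs_triang. eapply Rle_trans. apply Rplus_le_compat_r. apply Rabs_triang.
 unfold Rdiv at 1. rewrite Rabs_mult. rewrite (Rabs_right (/2)) by lra.
 assert (0 < / INR T) by (apply Rinv_0_lt_compat; lra).
 replace (4 / INR T) with (4 * / INR T) by (unfold Rdiv; ring). lra. Qed.

End Rat.

Lemma subseq_k k u (l : R) : (1 <= k)%nat -> is_lim_seq u l -> is_lim_seq (fun t => u (k * S t)%nat) l.
Proof. intros Hk H. apply (is_lim_seq_subseq u l (fun t => (k * S t)%nat)); auto.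
 intros P [N HN]. exists N. intros n Hn. apply HN. nia. Qed.

Definition Rf x := ln x / 2 + PI / (12 * x) - PI * x / 12.

Lemma rat_case p q : (1 <= p)%nat -> (1 <= q)%nat ->
  lam (2 * PI * (INR p / INR q)) - lam (2 * PI / (INR p / INR q)) = Rf (INR p / INR q).
Proof. intros Hp Hq. set (x := INR p / INR q).
 assert (Hx : 0 < x) by (unfold x; apply Rdiv_lt_0_compat; apply lt_0_INR; lia).
 set (u := fun t => fs (ell (2 * PI * x)) (q * S t) - fs (ell (2 * PI / x)) (p * S t)
        - (Zs (q * S t) / (2 * PI * x) - x * Zs (p * S t) / (2 * PI) + ln x / 2)).
 assert (H0 : is_lim_seq u 0).
 { apply (is_lim_seq_le_le (fun t => - (4 / (INR t + 1))) u (fun t => 4 / (INR t + 1))).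
   - intros t. pose proof (main_bound p q (S t) Hp Hq ltac:(lia)). rewrite S_INR in H.
     apply Rabs_le_between in H. unfold u, x. lra.
   - eapply is_lim_seq_ext; [|apply (lim_c_over_n (-4))]. intros t; simpl. unfold Rdiv; ring.
   - apply lim_c_over_n. }
 assert (H1 : is_lim_seq u (lam (2 * PI * x) - lam (2 * PI / x) - (Zeta2 / (2 * PI * x) - x * Zeta2 / (2 * PI) + ln x / 2))).
 { pose proof PI_RGT_0.
   apply is_lim_seq_minus'. apply is_lim_seq_minus'.
   apply (subseq_k q (fs (ell (2 * PI * x)))); auto. apply lam_ser. nra.
   apply (subseq_k p (fs (ell (2 * PI / x)))); auto. apply lam_ser. apply Rdiv_lt_0_compat; lra.
   apply is_lim_seq_plus'. apply is_lim_seq_minus'.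
   apply (is_lim_seq_ext (fun t => / (2 * PI * x) * Zs (q * S t))). intros; unfold Rdiv; ring.
   replace (Zeta2 / (2 * PI * x)) with (/ (2 * PI * x) * Zeta2) by (unfold Rdiv; ring).
   apply (is_lim_seq_scal_l _ _ Zeta2). apply (subseq_k q (Zs)); auto. apply Zeta2_ser.
   apply (is_lim_seq_ext (fun t => x / (2 * PI) * Zs (p * S t))). intros; unfold Rdiv; ring.
   replace (x * Zeta2 / (2 * PI)) with (x / (2 * PI) * Zeta2) by (unfold Rdiv; ring).
   apply (is_lim_seq_scal_l _ _ Zeta2). apply (subseq_k p (Zs)); auto. apply Zeta2_ser.
   apply is_lim_seq_const. }
 pose proof (is_lim_seq_unique _ _ H0). pose proof (is_lim_seq_unique _ _ H1). rewrite H in H2. injection H2. intros E.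
 rewrite zeta2_val in E. unfold Rf. pose proof PI_RGT_0.
 replace (PI / (12 * x)) with (PI ^ 2 / 6 / (2 * PI * x)) by (field; lra).
 replace (PI * x / 12) with (x * (PI ^ 2 / 6) / (2 * PI)) by (field; lra). lra. Qed.

Lemma G_decr x y : 0 < x -> x <= y -> lam (2 * PI * y) - lam (2 * PI / y) <= lam (2 * PI * x) - lam (2 * PI / x).
Proof. intros Hx Hxy. pose proof PI_RGT_0.
 assert (lam (2 * PI * y) <= lam (2 * PI * x)) by (apply lam_decr; nra).
 assert (lam (2 * PI / x) <= lam (2 * PI / y)).
 { apply lam_decr. apply Rdiv_lt_0_compat; lra. unfold Rdiv. apply Rmult_le_compat_l. lra. apply Rinv_le_contravar; lra. }
 lra. Qed.

Lemma Rf_cont x : 0 < x -> forall eps, 0 < eps -> exists d, 0 < d /\ forall r, 0 < r -> Rabs (r - x) < d -> Rabs (Rf r - Rf x) < eps.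
Proof. intros Hx eps He.
 assert (Hc : continuity_pt Rf x).
 { apply derivable_continuous_pt. 
   exists (/ (2 * x) - PI / (12 * x^2) - PI / 12). apply is_derive_Reals. unfold Rf. auto_derive.
   repeat split; lra. field. lra. }
 destruct (Hc eps He) as [d [Hd Hf]]. exists d; split; auto. intros r Hr Hrx.
 destruct (Req_dec r x). subst. rewrite Rminus_diag, Rabs_R0. auto.
 apply (Hf r). split. split. exact I. auto. exact Hrx. Qed.

Lemma real_case x : 0 < x -> lam (2 * PI * x) - lam (2 * PI / x) = Rf x.
Proof. intros Hx. apply Rle_antisym.
 - apply Rle_plus_epsilon. intros eps He. destruct (Rf_cont x Hx eps He) as [d [Hd Hf]].
   destruct (arch_nat (Rmax (/ d) (/ x))) as [q Hq].
   assert (Hq1 : / d < INR q) by (eapply Rle_lt_trans; [apply Rmax_l|exact Hq]).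
   assert (Hq2 : / x < INR q) by (eapply Rle_lt_trans; [apply Rmax_r|exact Hq]).
   assert (0 < / d) by (apply Rinv_0_lt_compat; auto). assert (0 < / x) by (apply Rinv_0_lt_compat; auto).
   assert (HqR : 0 < INR q) by lra.
   destruct (nfloor_ex (x * INR q)) as [p Hp]. nra.
   assert (1 <= x * INR q). { assert (x * / x < x * INR q) by (apply Rmult_lt_compat_l; lra). rewrite Rinv_r in H1 by lra. lra. }
   assert (Hp1 : (1 <= p)%nat). { destruct p. simpl in Hp. lra. lia. }
   assert (Hq0 : (1 <= q)%nat). { destruct q. simpl in HqR. lra. lia. }
   assert (HpR : 0 < INR p) by (apply lt_0_INR; lia).
   set (r := INR p / INR q).
   assert (Hr : 0 < r) by (unfold r; apply Rdiv_lt_0_compat; auto).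
   assert (Hrx : r <= x). { unfold r. apply Rmult_le_reg_r with (INR q); auto. unfold Rdiv. rewrite Rmult_assoc, Rinv_l by lra. lra. }
   assert (Hrx2 : x - r < d).
   { unfold r. assert (Eq : x - INR p / INR q = (x * INR q - INR p) / INR q) by (field; lra).
     rewrite Eq. apply Rle_lt_trans with (1 / INR q). unfold Rdiv. apply Rmult_le_compat_r. apply Rlt_le, Rinv_0_lt_compat; auto. lra.
     unfold Rdiv; rewrite Rmult_1_l. rewrite <- (Rinv_inv d). apply Rinv_lt_contravar. nra. lra. }
   pose proof (G_decr r x Hr Hrx) as G1. pose proof (rat_case p q Hp1 Hq0) as G2. fold r in G2.
   assert (G3 : Rabs (Rf r - Rf x) < eps) by (apply Hf; auto; rewrite Rabs_minus_sym, Rabs_right; lra).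
   apply Rabs_lt_between in G3. lra.
 - apply Rle_plus_epsilon. intros eps He. destruct (Rf_cont x Hx eps He) as [d [Hd Hf]].
   destruct (arch_nat (/ d)) as [q Hq].
   assert (0 < / d) by (apply Rinv_0_lt_compat; auto).
   assert (HqR : 0 < INR q) by lra.
   assert (Hq0 : (1 <= q)%nat). { destruct q. simpl in HqR. lra. lia. }
   destruct (nfloor_ex (x * INR q)) as [p0 Hp]. nra.
   set (p := S p0). assert (Hp1 : (1 <= p)%nat) by (unfold p; lia).
   assert (HpR : INR p = INR p0 + 1) by (unfold p; apply S_INR).
   set (r := INR p / INR q).
   pose proof (pos_INR p0). assert (Hr : 0 < r) by (unfold r; apply Rdiv_lt_0_compat; lra).
   assert (Hrx : x <= r). { unfold r. apply Rmult_le_reg_r with (INR q); auto. unfold Rdiv. rewrite Rmult_assoc, Rinv_l by lra. lra. }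
   assert (Hrx2 : r - x < d).
   { unfold r. assert (Eq : INR p / INR q - x = (INR p - x * INR q) / INR q) by (field; lra).
     rewrite Eq. apply Rle_lt_trans with (1 / INR q). unfold Rdiv. apply Rmult_le_compat_r. apply Rlt_le, Rinv_0_lt_compat; auto. lra.
     unfold Rdiv; rewrite Rmult_1_l. rewrite <- (Rinv_inv d). apply Rinv_lt_contravar. nra. lra. }
   pose proof (G_decr x r Hx Hrx) as G1. pose proof (rat_case p q Hp1 Hq0) as G2. fold r in G2.
   assert (G3 : Rabs (Rf r - Rf x) < eps) by (apply Hf; auto; rewrite Rabs_right; lra).
   apply Rabs_lt_between in G3. lra. Qed.

Lemma term1_eq a k : 0 < a -> term1 a (S k) = ell a k - ell (2 * a) k.
Proof. intros Ha. unfold term1, ell. rewrite S_INR. pose proof (INR_S_pos k).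
 set (n := INR k + 1) in *.
 assert (E : exp (2 * n * a) = exp (n * a) * exp (n * a)) by (rewrite <- exp_plus; f_equal; ring).
 replace (n * (2 * a)) with (2 * n * a) by ring. rewrite E.
 assert (1 < exp (n * a)) by (apply exp_gt1; nra).
 field. repeat split; try lra; nra. Qed.

Lemma S1_series a : 0 < a -> is_series (fun k => term1 a (S k)) (lam a - lam (2 * a)).
Proof. intros Ha. apply ser_is_series. eapply ser_ext; [|apply ser_minus; apply lam_ser; lra].
 intros k; simpl. symmetry; apply term1_eq; auto. Qed.

Lemma even_odd_lim (v : nat -> R) (l : R) : is_lim_seq (fun K => v (2 * K)%nat) l ->
  is_lim_seq (fun K => v (S (2 * K))) l -> is_lim_seq v l.
Proof. intros H1 H2. apply is_lim_seq_spec in H1. apply is_lim_seq_spec in H2. apply is_lim_seq_spec.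
 intros eps. destruct (H1 eps) as [N1 HN1]. destruct (H2 eps) as [N2 HN2].
 exists (2 * (N1 + N2) + 1)%nat. intros n Hn. destruct (Nat.Even_or_Odd n) as [[K HK]|[K HK]]; subst n.
 - apply HN1. lia.
 - replace (2 * K + 1)%nat with (S (2 * K)) by lia. apply HN2. lia. Qed.

Lemma ell_double b j : 0 < b -> ell (2 * b) (S (2 * j)) = ell (4 * b) j / 2.
Proof. intros Hb. unfold ell. rewrite S_INR, mult_INR. replace (INR 2) with 2 by (simpl; lra). pose proof (pos_INR j).
 replace ((2 * INR j + 1 + 1) * (2 * b)) with ((INR j + 1) * (4 * b)) by ring.
 assert (1 < exp ((INR j + 1) * (4 * b))) by (apply exp_gt1; nra).
 field. split; lra. Qed.

Lemma S2_series b : 0 < b -> is_series (fun k => term2 b (S k)) (lam (4 * b) - lam (2 * b)).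
Proof. intros Hb. apply ser_is_series.
 set (u := fun k => term2 b (S k)).
 assert (Hu : forall k, u k = (-1) ^ (S k) * ell (2 * b) k).
 { intros k. unfold u, term2, ell. rewrite S_INR. unfold Rdiv. f_equal. f_equal. f_equal. f_equal. f_equal. ring. }
 assert (Hev : forall K, fs u (2 * K) = fs (ell (4 * b)) K - fs (ell (2 * b)) (2 * K)).
 { induction K. simpl; ring.
   replace (2 * S K)%nat with (S (S (2 * K))) by lia.
   transitivity (fs u (2*K)%nat + u (2*K)%nat + u (S (2*K)%nat)); [reflexivity|].
   change (fs (ell (4*b)) (S K)) with (fs (ell (4*b)) K + ell (4*b) K).
   change (fs (ell (2*b)) (S (S (2*K)%nat))) with (fs (ell (2*b)) (2*K)%nat + ell (2*b) (2*K)%nat + ell (2*b) (S (2*K)%nat)).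
   rewrite IHK, !Hu.
   assert (P0 : (-1)^(2*K)%nat = 1) by (rewrite pow_mult; replace ((-1)^2) with 1 by ring; apply pow1).
   replace ((-1)^(S (2*K)%nat)) with (-1) by (rewrite <- tech_pow_Rmult, P0; ring).
   replace ((-1)^(S (S (2*K)%nat))) with 1 by (rewrite <- !tech_pow_Rmult, P0; ring).
   rewrite ell_double by auto. field. }
 unfold ser. apply even_odd_lim.
 - eapply is_lim_seq_ext. intros K; symmetry; apply Hev.
   apply is_lim_seq_minus'. apply lam_ser; lra.
   apply (is_lim_seq_subseq (fs (ell (2 * b))) _ (fun K => (2 * K)%nat)). 
   intros P [N HN]. exists N. intros n Hn. apply HN. lia. apply lam_ser; lra.
 - eapply is_lim_seq_ext. intros K. symmetry. change (fs u (S (2*K)%nat)) with (fs u (2*K)%nat + u (2*K)%nat). rewrite Hev. reflexivity.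
   replace (lam (4 * b) - lam (2 * b)) with ((lam (4 * b) - lam (2 * b)) + 0) by ring.
   apply is_lim_seq_plus'.
   + apply is_lim_seq_minus'. apply lam_ser; lra.
     apply (is_lim_seq_subseq (fs (ell (2 * b))) _ (fun K => (2 * K)%nat)).
     intros P [N HN]. exists N. intros n Hn. apply HN. lia. apply lam_ser; lra.
   + apply is_lim_seq_spec. intros eps.
     assert (Hl := ex_series_lim_0 u). 
     assert (Hex : ex_series u).
     { apply (ex_series_le u (fun k => / (2 * b) * / (INR k + 1)^2)).
       intros k. rewrite Hu. change (Rabs ((-1) ^ S k * ell (2 * b) k) <= / (2 * b) * / (INR k + 1) ^ 2). rewrite Rabs_mult, pow_1_abs, Rmult_1_l. apply ell_bound; lra.
        
       exists (/ (2 * b) * Zeta2). apply ser_is_series. apply invsq_scal_ser. }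
     specialize (Hl Hex). apply is_lim_seq_spec in Hl. destruct (Hl eps) as [N HN].
     exists N. intros n Hn. apply HN. lia. Qed.

Theorem corollary1p12 (a b : R) (ha : 0 < a) (hb : 0 < b) (hab : a * b = PI ^ 2) :
  exists S1 S2 : R,
    is_series (fun k : nat => term1 a (S k)) S1 /\
    is_series (fun k : nat => term2 b (S k)) S2 /\
    S1 - S2 = - (1/2) * ln 2 + (a + 2 * b) / 24.
Proof.
 exists (lam a - lam (2 * a)), (lam (4 * b) - lam (2 * b)).
 split; [apply S1_series; auto|]. split; [apply S2_series; auto|].
 pose proof PI_RGT_0.
 set (x1 := a / (2 * PI)). set (x2 := a / PI).
 assert (Hx1 : 0 < x1) by (unfold x1; apply Rdiv_lt_0_compat; lra).
 assert (Hx2 : 0 < x2) by (unfold x2; apply Rdiv_lt_0_compat; lra).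
 pose proof (real_case x1 Hx1) as R1. pose proof (real_case x2 Hx2) as R2.
 replace (2 * PI * x1) with a in R1 by (unfold x1; field; lra).
 assert (Hb' : b = PI^2 / a) by (rewrite <- hab; field; lra).
 replace (2 * PI / x1) with (4 * b) in R1 by (rewrite Hb'; unfold x1; field; lra).
 replace (2 * PI * x2) with (2 * a) in R2 by (unfold x2; field; lra).
 replace (2 * PI / x2) with (2 * b) in R2 by (rewrite Hb'; unfold x2; field; lra).
 assert (E : lam a - lam (2 * a) - (lam (4 * b) - lam (2 * b)) = Rf x1 - Rf x2) by lra.
 rewrite E. unfold Rf.
 assert (Hl : ln x1 = ln x2 - ln 2).
 { replace x1 with (x2 / 2) by (unfold x1, x2; field; lra). apply ln_div'; lra. }
 rewrite Hl. unfold x1, x2.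
 replace (PI / (12 * (a / (2 * PI)))) with (PI^2 / (6 * a)) by (field; lra).
 replace (PI / (12 * (a / PI))) with (PI^2 / (12 * a)) by (field; lra).
 rewrite <- hab. field. lra. Qed.
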